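(* Under any stationary policy $v$, the Markov chain $\{X_t\}$ has a single aperiodic communicating class $\widetilde S$ containing $\theta=[0,\dots,0]$ (possibly together with some transient states), and restricted to $\widetilde S$ the chain is geometrically ergodic. Moreover, letting $\pi$ denote its unique stationary distribution and $\tau_\theta := \min\{t\ge 0: X_t=\theta\}$: (1) there exists $a>0$ such that for every $x\ne\theta$, $\mathbb{E}[e^{a\tau_\theta}\mid X_0=x]\le K_x<\infty$ for some constant $K_x$, uniformly in $v$; (2) for every $f$ with $f = O(\Phi)$, $\mathbb{E}[f(X_t)]\to \sum_y \pi(y) f(y)$ exponentially fast, uniformly in $v$; in fact there are $K>0$ and $0<\eta<1$ with $\left|\mathbb{E}[f(X_t)\mid X_0=x] - \sum_y \pi(y)f(y)\right| \le K\left(1+\sum_i e^{a x_i}\right)\eta^t$ for $x=[x_1,\dots,x_I]$; (3) $\sup \mathbb{E}\left[\sum_i X^i_t\right]<\infty$, where the supremum is over all stationary policies and the expectation is with respect to the corresponding stationary distributions; in particular these stationary distributions form a compact (tight) set of probability measures; (4) $\sup \mathbb{E}\left[\sum_{t=0}^{\tau_\theta} \sum_i X^i_t\right] < \infty$, with the supremum as in (3).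
   Context: Processor sharing model: a single Bernoulli arrival process $\{\xi_t\}$ ($\xi_t\in\{0,1\}$ i.i.d., $P(\xi_t=1)=p\in(0,1)$). There are $I$ queues with lengths $X^i_t\in\mathcal N:=\{0,1,2,\dots\}$ evolving as $X^i_{t+1} = X^i_t - D^i_{t+1} + \nu^i_t \xi_{t+1}$, where $\nu^i_t\in\{0,1\}$, $\sum_i\nu^i_t=1$. Given $X^i_t = x\ge 1$, $D^i_{t+1}\sim \mathrm{Binomial}(x, q_i/x)$; if $x=0$ there are no departures. Standing assumption: $1>q_1>\dots>q_I>2p>0$. A stationary policy is a map $v:\mathcal N^I\to\{e_1,\dots,e_I\}$ (unit coordinate vectors) with $\nu_t = v(X_t)$; under it $\{X_t\}$ is a time-homogeneous Markov chain. $\Phi([x_1,\dots,x_I])=\sum_i e^{a x_i}$ where $a>0$ satisfies $p(e^a-1)<\frac{q_I}{2}(1-e^{-a})$. *)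

(* Defs.v *)
From Stdlib Require Import Reals List Arith ZArith.
Import ListNotations.
Open Scope R_scope.

(* A state [x_1,...,x_I] is a list of naturals of length I (index i is 0-based). *)
Definition state := list nat.
Definition valid (I : nat) (x : state) : Prop := length x = I.
Definition theta (I : nat) : state := repeat 0%nat I.

Fixpoint box (n k : nat) : list state :=
  match k with
  | O => [[]]
  | S k' => flat_map (fun l => map (fun j => j :: l) (seq 0 (S n))) (box n k')
  end.

Definition lsum (l : list state) (g : state -> R) : R :=
  fold_right (fun x acc => g x + acc) 0 l.

(* Partial sums of a series over N^I along the exhausting boxes [0,n]^I. *)
Definition boxsum (I : nat) (g : state -> R) (n : nat) : R := lsum (box n I) g.

Definition has_sum (I : nat) (g : state -> R) (s : R) : Prop :=
  (exists B, forall n, boxsum I (fun x => Rabs (g x)) n <= B) /\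
  Un_cv (boxsum I g) s.

(* P(D = k) for D ~ Binomial(n, r); for n = 0 this is the point mass at 0. *)
Definition dep_pmf (n : nat) (r : R) (k : Z) : R :=
  if (Z.leb 0 k && Z.leb k (Z.of_nat n))%bool
  then C n (Z.to_nat k) * r ^ (Z.to_nat k) * (1 - r) ^ (n - Z.to_nat k)
  else 0.

Definition arrival_pmf (p : R) (xi : nat) : R := if Nat.eqb xi 1 then p else 1 - p.

(* A stationary policy: state -> index of the queue receiving the arrival
   (index j encodes the unit vector e_{j+1}). *)
Definition policy (I : nat) (v : state -> nat) : Prop :=
  forall x, valid I x -> (v x < I)%nat.

(* One-step transition probability P(X_{t+1} = y | X_t = x) under policy v:
   X^i_{t+1} = X^i_t - D^i + nu^i xi, D^i ~ Bin(x_i, q_i/x_i) independent,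
   xi ~ Bernoulli(p) independent. *)
Definition trans (I : nat) (p : R) (q : nat -> R) (v : state -> nat)
  (x y : state) : R :=
  fold_right Rplus 0
    (map (fun xi =>
       arrival_pmf p xi *
       fold_right Rmult 1
         (map (fun i =>
            let xi_i := nth i x 0%nat in
            let e := if Nat.eqb i (v x) then xi else 0%nat in
            dep_pmf xi_i (q i / INR xi_i)
              (Z.of_nat xi_i + Z.of_nat e - Z.of_nat (nth i y 0%nat))%Z)
          (seq 0 I)))
     [0%nat; 1%nat]).

(* The support of trans x . is contained in box (list_max x + 1). *)
Definition Pf (I : nat) (p : R) (q : nat -> R) (v : state -> nat)
  (g : state -> R) (x : state) : R :=
  lsum (box (S (list_max x)) I) (fun z => trans I p q v x z * g z).

Fixpoint expect (I : nat) (p : R) (q : nat -> R) (v : state -> nat)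
  (t : nat) (g : state -> R) : state -> R :=
  match t with
  | O => g
  | S t' => Pf I p q v (expect I p q v t' g)
  end.

Definition indic (y : state) : state -> R :=
  fun z => if list_eq_dec Nat.eq_dec z y then 1 else 0.

Definition Pn I p q v (t : nat) (x y : state) : R := expect I p q v t (indic y) x.

Definition reach I p q v (x y : state) : Prop := exists t, Pn I p q v t x y > 0.

Definition in_class I p q v (x : state) : Prop :=
  reach I p q v (theta I) x /\ reach I p q v x (theta I).

(* theta is aperiodic: gcd{ n >= 1 : P^n(theta,theta) > 0 } = 1. *)
Definition aperiodic I p q v : Prop :=
  forall d : nat,
    (1 <= d)%nat ->
    (forall n : nat, (1 <= n)%nat -> Pn I p q v n (theta I) (theta I) > 0 ->
        Nat.divide d n) ->
    d = 1%nat.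

Definition stationary I p q v (pi : state -> R) : Prop :=
  (forall x, valid I x -> 0 <= pi x) /\
  has_sum I pi 1 /\
  (forall y, valid I y -> has_sum I (fun x => pi x * trans I p q v x y) (pi y)).

(* hit_prob t x = P(tau_theta = t | X_0 = x), tau_theta = min{t >= 0 : X_t = theta}. *)
Fixpoint hit_prob I p q v (t : nat) (x : state) : R :=
  match t with
  | O => if list_eq_dec Nat.eq_dec x (theta I) then 1 else 0
  | S t' => if list_eq_dec Nat.eq_dec x (theta I) then 0
            else Pf I p q v (hit_prob I p q v t') x
  end.

(* taboo_sum g n x = E[ sum_{t=0}^{min(tau_theta, n)} g(X_t) | X_0 = x ]. *)
Fixpoint taboo_sum I p q v (g : state -> R) (n : nat) (x : state) : R :=
  match n with
  | O => g x
  | S n' => g x + (if list_eq_dec Nat.eq_dec x (theta I) then 0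
                   else Pf I p q v (taboo_sum I p q v g n') x)
  end.

Definition total (I : nat) (x : state) : R :=
  fold_right Rplus 0 (map (fun i => INR (nth i x 0%nat)) (seq 0 I)).

Definition Phi (I : nat) (a : R) (x : state) : R :=
  fold_right Rplus 0 (map (fun i => exp (a * INR (nth i x 0%nat))) (seq 0 I)).

(* Main.v *)
Require Import Defs.
From Stdlib Require Import Reals List Arith ZArith Lra Lia.
Import ListNotations.
Open Scope R_scope.

Definition gsum {A} (l : list A) (f : A -> R) : R :=
  fold_right (fun x acc => f x + acc) 0 l.

Lemma lsum_gsum l g : lsum l g = gsum l g. Proof. reflexivity. Qed.

Lemma gsum_cons {A} (x:A) l f : gsum (x::l) f = f x + gsum l f.
Proof. reflexivity. Qed.
Lemma gsum_nil {A} f : gsum (@nil A) f = 0.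
Proof. reflexivity. Qed.

Lemma gsum_app {A} (l1 l2 : list A) f : gsum (l1++l2) f = gsum l1 f + gsum l2 f.
Proof. induction l1; simpl; [lra|]. unfold gsum in *; simpl. rewrite IHl1. lra. Qed.

Lemma gsum_map {A B} (h:A->B) l f : gsum (map h l) f = gsum l (fun x => f (h x)).
Proof. induction l; simpl; auto. unfold gsum in *; simpl. rewrite IHl; auto. Qed.

Lemma gsum_flat_map {A B} (h : A -> list B) l f :
  gsum (flat_map h l) f = gsum l (fun x => gsum (h x) f).
Proof. induction l; simpl; auto. rewrite gsum_app, IHl. reflexivity. Qed.

Lemma gsum_ext_in {A} (l:list A) f g : (forall x, In x l -> f x = g x) -> gsum l f = gsum l g.
Proof. induction l; intros H; simpl; auto. unfold gsum in *; simpl.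
  rewrite H by (left; auto). rewrite IHl; auto. intros; apply H; right; auto. Qed.

Lemma gsum_plus {A} (l:list A) f g : gsum l (fun x => f x + g x) = gsum l f + gsum l g.
Proof. induction l; simpl; [unfold gsum; simpl; lra|]. unfold gsum in *; simpl. rewrite IHl; lra. Qed.

Lemma gsum_minus {A} (l:list A) f g : gsum l (fun x => f x - g x) = gsum l f - gsum l g.
Proof. induction l; simpl; [unfold gsum; simpl; lra|]. unfold gsum in *; simpl. rewrite IHl; lra. Qed.

Lemma gsum_scal {A} (l:list A) c f : gsum l (fun x => c * f x) = c * gsum l f.
Proof. induction l; simpl; [unfold gsum; simpl; lra|]. unfold gsum in *; simpl. rewrite IHl; lra. Qed.

Lemma gsum_zero {A} (l:list A) : gsum l (fun _ => 0) = 0.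
Proof. induction l; simpl; auto. unfold gsum in *; simpl. rewrite IHl; lra. Qed.

Lemma gsum_const {A} (l:list A) c : gsum l (fun _ => c) = INR (length l) * c.
Proof. induction l; simpl length; [unfold gsum; simpl; lra|]. rewrite gsum_cons, IHl, S_INR; lra. Qed.

Lemma gsum_le_in {A} (l:list A) f g : (forall x, In x l -> f x <= g x) -> gsum l f <= gsum l g.
Proof. induction l; intros H; [unfold gsum; simpl; lra|]. rewrite !gsum_cons.
  assert (f a <= g a) by (apply H; left; auto).
  assert (gsum l f <= gsum l g) by (apply IHl; intros; apply H; right; auto). lra. Qed.

Lemma gsum_nonneg {A} (l:list A) f : (forall x, In x l -> 0 <= f x) -> 0 <= gsum l f.
Proof. intros H. rewrite <- (gsum_zero l). apply gsum_le_in; auto. Qed.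

Lemma gsum_abs {A} (l:list A) f : Rabs (gsum l f) <= gsum l (fun x => Rabs (f x)).
Proof. induction l; [unfold gsum; simpl; rewrite Rabs_R0; lra|]. rewrite !gsum_cons.
  eapply Rle_trans; [apply Rabs_triang|]. lra. Qed.

Lemma gsum_swap {A B} (l1:list A) (l2 : list B) F :
  gsum l1 (fun x => gsum l2 (F x)) = gsum l2 (fun y => gsum l1 (fun x => F x y)).
Proof. induction l1.
  - rewrite gsum_nil. symmetry. apply gsum_zero.
  - rewrite gsum_cons, IHl1. rewrite <- gsum_plus. reflexivity. Qed.

Lemma gsum_single_le {A} (l:list A) f x : (forall y, In y l -> 0 <= f y) -> In x l -> f x <= gsum l f.
Proof. induction l; intros H Hin; [destruct Hin|]. rewrite gsum_cons.
  destruct Hin as [->|Hin].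
  - assert (0 <= gsum l f) by (apply gsum_nonneg; intros; apply H; right; auto). lra.
  - assert (0 <= f a) by (apply H; left; auto). assert (f x <= gsum l f) by (apply IHl; auto; intros; apply H; right; auto). lra. Qed.

Lemma fold_plus_map {A} (l:list A) f : fold_right Rplus 0 (map f l) = gsum l f.
Proof. induction l; simpl; auto. rewrite IHl. reflexivity. Qed.

Definition gprod {A} (l : list A) (f : A -> R) : R := fold_right Rmult 1 (map f l).

Lemma gprod_cons {A} (x:A) l f : gprod (x::l) f = f x * gprod l f.
Proof. reflexivity. Qed.
Lemma gprod_app {A} (l1 l2 : list A) f : gprod (l1++l2) f = gprod l1 f * gprod l2 f.
Proof. induction l1; unfold gprod in *; simpl; [lra|]. rewrite IHl1. lra. Qed.
Lemma gprod_ext_in {A} (l:list A) f g : (forall x, In x l -> f x = g x) -> gprod l f = gprod l g.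
Proof. induction l; intros H; simpl; auto. unfold gprod in *; simpl.
  rewrite H by (left; auto). rewrite IHl; auto. intros; apply H; right; auto. Qed.
Lemma gprod_nonneg {A} (l:list A) f : (forall x, In x l -> 0 <= f x) -> 0 <= gprod l f.
Proof. induction l; intros H; unfold gprod in *; simpl; [lra|].
  apply Rmult_le_pos; [apply H; left; auto| apply IHl; intros; apply H; right; auto]. Qed.
Lemma gprod_pos {A} (l:list A) f : (forall x, In x l -> 0 < f x) -> 0 < gprod l f.
Proof. induction l; intros H; unfold gprod in *; simpl; [lra|].
  apply Rmult_lt_0_compat; [apply H; left; auto| apply IHl; intros; apply H; right; auto]. Qed.
Lemma gprod_zero {A} (l:list A) f x : In x l -> f x = 0 -> gprod l f = 0.
Proof. induction l; intros Hin H; [destruct Hin|]. rewrite gprod_cons.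
  destruct Hin as [->|Hin]; [rewrite H; lra|]. rewrite (IHl Hin H); lra. Qed.
Lemma gprod_one {A} (l:list A) : gprod l (fun _ => 1) = 1.
Proof. induction l; unfold gprod in *; simpl; auto. rewrite IHl; lra. Qed.
Lemma gprod_ge {A} (l:list A) f c : 0 <= c -> (forall x, In x l -> c <= f x) -> c ^ length l <= gprod l f.
Proof. induction l; intros Hc H; unfold gprod in *; simpl; [lra|].
  apply Rmult_le_compat; auto. apply pow_le; auto. apply H; left; auto.
  apply IHl; auto; intros; apply H; right; auto. Qed.
Lemma gprod_le {A} (l:list A) f g : (forall x, In x l -> 0 <= f x <= g x) -> gprod l f <= gprod l g.
Proof. induction l; intros H; unfold gprod in *; simpl; [lra|].
  destruct (H a (or_introl eq_refl)).
  apply Rmult_le_compat; auto. apply gprod_nonneg; intros; apply H; right; auto.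
  apply IHl; intros; apply H; right; auto. Qed.


Definition inb (N : nat) (z : state) : bool := forallb (fun j => Nat.leb j N) z.

Lemma seq_sum_S n f : gsum (seq 0 (S n)) f = gsum (seq 0 n) f + f n.
Proof. rewrite seq_S, gsum_app, gsum_cons, gsum_nil. simpl. lra. Qed.

Lemma seq_restrict N M h : (N <= M)%nat -> (forall j, (N < j)%nat -> h j = 0) ->
  gsum (seq 0 (S M)) h = gsum (seq 0 (S N)) h.
Proof. intros HNM H. replace M with (N + (M - N))%nat by lia.
  generalize (M - N)%nat as d. induction d.
  - rewrite Nat.add_0_r; auto.
  - rewrite Nat.add_succ_r, seq_sum_S, IHd, H by lia. lra. Qed.

Lemma seq_single N j0 G : gsum (seq 0 (S N)) (fun j => G j * (if Nat.eq_dec j0 j then 1 else 0))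
   = if Nat.leb j0 N then G j0 else 0.
Proof. induction N.
  - simpl. unfold gsum; simpl. destruct j0; simpl; [destruct (Nat.eq_dec 0 0); [lra|congruence]|].
    destruct (Nat.eq_dec (S j0) 0); [lia|lra].
  - rewrite seq_sum_S, IHN. destruct (Nat.eq_dec j0 (S N)).
    + subst. rewrite (proj2 (Nat.leb_gt (S N) N)) by lia. rewrite Nat.leb_refl. lra.
    + destruct (Nat.leb j0 N) eqn:E1; destruct (Nat.leb j0 (S N)) eqn:E2;
      apply Nat.leb_le in E1 || apply Nat.leb_gt in E1;
      apply Nat.leb_le in E2 || apply Nat.leb_gt in E2; try lia; lra. Qed.

Lemma box_S_sum n k g : gsum (box n (S k)) g =
  gsum (box n k) (fun l => gsum (seq 0 (S n)) (fun j => g (j::l))).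
Proof. cbn [box]. rewrite gsum_flat_map. apply gsum_ext_in. intros. rewrite gsum_map. reflexivity. Qed.

Lemma inb_cons N j l : inb N (j::l) = (Nat.leb j N && inb N l)%bool.
Proof. reflexivity. Qed.

Lemma box_in n k z : In z (box n k) <-> (length z = k /\ inb n z = true).
Proof. revert z; induction k; intros z; cbn [box].
  - split. intros [<-|[]]; split; auto. intros [H _]; destruct z; simpl in H; try lia; left; auto.
  - rewrite in_flat_map. split.
    + intros [l [Hl Hz]]. apply in_map_iff in Hz. destruct Hz as [j [<- Hj]].
      apply IHk in Hl. apply in_seq in Hj. split; [simpl; lia|]. rewrite inb_cons.
      apply andb_true_intro; split; [apply Nat.leb_le; lia| tauto].
    + intros [Hlen Hinb]. destruct z as [|j l]; simpl in Hlen; [lia|].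
      rewrite inb_cons in Hinb. apply andb_prop in Hinb. destruct Hinb as [H1 H2].
      exists l. split. apply IHk; split; auto; lia.
      apply in_map_iff. exists j; split; auto. apply in_seq. apply Nat.leb_le in H1; lia. Qed.

Lemma box_restrict k : forall g N M, (N <= M)%nat ->
  (forall z, length z = k -> inb N z = false -> g z = 0) ->
  gsum (box M k) g = gsum (box N k) g.
Proof. induction k; intros g N M HNM H.
  - reflexivity.
  - rewrite !box_S_sum.
    transitivity (gsum (box M k) (fun l => gsum (seq 0 (S N)) (fun j => g (j :: l)))).
    + apply gsum_ext_in. intros l Hl. apply seq_restrict; auto. intros j Hj.
      apply H. apply box_in in Hl. simpl; lia. rewrite inb_cons.
      rewrite (proj2 (Nat.leb_gt j N) Hj). reflexivity.
    + apply IHk; auto. intros z Hz Hb. rewrite <- (gsum_zero (seq 0 (S N))).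
      apply gsum_ext_in. intros j _. apply H. simpl; lia. rewrite inb_cons, Hb.
      apply Bool.andb_false_r. Qed.

Lemma nth_cons_shift {A} (H : nat -> A -> R) (j : A) l k d :
  gprod (seq 0 (S k)) (fun i => H i (nth i (j::l) d)) = H 0%nat j * gprod (seq 0 k) (fun i => H (S i) (nth i l d)).
Proof. rewrite <- cons_seq, gprod_cons. f_equal. rewrite <- seq_shift. unfold gprod. rewrite map_map. reflexivity. Qed.

Lemma box_prod m k : forall H : nat -> nat -> R,
  gsum (box m k) (fun y => gprod (seq 0 k) (fun i => H i (nth i y 0%nat))) =
  gprod (seq 0 k) (fun i => gsum (seq 0 (S m)) (H i)).
Proof. induction k; intros H.
  - simpl. unfold gsum, gprod; simpl. lra.
  - rewrite box_S_sum.
    transitivity (gsum (box m k) (fun l => gsum (seq 0 (S m)) (H 0%nat) *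
        gprod (seq 0 k) (fun i => H (S i) (nth i l 0%nat)))).
    + apply gsum_ext_in. intros l _. rewrite <- Rmult_comm, <- gsum_scal. apply gsum_ext_in.
      intros j _. rewrite nth_cons_shift. lra.
    + rewrite gsum_scal, (IHk (fun i => H (S i))). rewrite <- (cons_seq k 0), gprod_cons. f_equal.
      rewrite <- seq_shift. unfold gprod. rewrite map_map. reflexivity. Qed.

Lemma indic_cons j l j0 l0 : indic (j::l) (j0::l0) =
  (if Nat.eq_dec j0 j then 1 else 0) * indic l l0.
Proof. unfold indic. destruct (list_eq_dec Nat.eq_dec (j0::l0) (j::l)) as [E|E].
  - injection E; intros; subst. destruct (Nat.eq_dec j j); [|congruence].
    destruct (list_eq_dec Nat.eq_dec l l); [lra|congruence].
  - destruct (Nat.eq_dec j0 j); [|lra]. subst.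
    destruct (list_eq_dec Nat.eq_dec l0 l); [subst; congruence|lra]. Qed.

Lemma box_single N k : forall F z, length z = k ->
  gsum (box N k) (fun y => F y * indic y z) = if inb N z then F z else 0.
Proof. induction k; intros F z Hz.
  - destruct z; simpl in Hz; [|lia]. unfold gsum; simpl. unfold indic.
    destruct (list_eq_dec Nat.eq_dec [] []); [lra|congruence].
  - destruct z as [|j0 l0]; simpl in Hz; [lia|]. rewrite box_S_sum.
    transitivity (gsum (box N k) (fun l => (if Nat.leb j0 N then F (j0::l) else 0) * indic l l0)).
    + apply gsum_ext_in. intros l _.
      transitivity (gsum (seq 0 (S N)) (fun j => (F (j::l) * indic l l0) * (if Nat.eq_dec j0 j then 1 else 0))).
      * apply gsum_ext_in; intros j _. rewrite indic_cons. lra.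
      * rewrite (seq_single N j0 (fun j => F (j::l) * indic l l0)). destruct (Nat.leb j0 N); lra.
    + rewrite (IHk (fun l => if Nat.leb j0 N then F (j0::l) else 0)) by lia.
      rewrite inb_cons. destruct (Nat.leb j0 N); destruct (inb N l0); simpl; auto. Qed.

Lemma indic_sym y z : indic y z = indic z y.
Proof. unfold indic. destruct (list_eq_dec Nat.eq_dec z y); destruct (list_eq_dec Nat.eq_dec y z); subst; congruence. Qed.


Lemma dep_neg n r k : (k < 0)%Z -> dep_pmf n r k = 0.
Proof. intros H. unfold dep_pmf. rewrite (proj2 (Z.leb_gt 0 k) H). reflexivity. Qed.

Lemma dep_nat n r k : dep_pmf n r (Z.of_nat k) =
  if Nat.leb k n then C n k * r ^ k * (1 - r) ^ (n - k) else 0.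
Proof. unfold dep_pmf. rewrite Nat2Z.id.
  destruct (Nat.leb k n) eqn:E.
  - apply Nat.leb_le in E. rewrite (proj2 (Z.leb_le 0 (Z.of_nat k))) by lia.
    rewrite (proj2 (Z.leb_le (Z.of_nat k) (Z.of_nat n))) by lia. reflexivity.
  - apply Nat.leb_gt in E. rewrite (proj2 (Z.leb_gt (Z.of_nat k) (Z.of_nat n))) by lia.
    rewrite Bool.andb_false_r. reflexivity. Qed.

Lemma C_nonneg n k : 0 <= C n k.
Proof. unfold C. apply Rle_mult_inv_pos. apply pos_INR.
  apply Rmult_lt_0_compat; apply INR_fact_lt_0. Qed.

Lemma dep_nonneg n r k : (n = 0%nat \/ 0 <= r <= 1) -> 0 <= dep_pmf n r k.
Proof. intros H. unfold dep_pmf.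
  destruct ((0 <=? k)%Z && (k <=? Z.of_nat n)%Z)%bool eqn:E; [|lra].
  apply andb_prop in E. destruct E as [E1 E2]. apply Z.leb_le in E1. apply Z.leb_le in E2.
  destruct H as [->|H].
  - assert (k = 0%Z) by lia. subst. simpl. unfold C. simpl. lra.
  - apply Rmult_le_pos; [apply Rmult_le_pos|]; [apply C_nonneg|apply pow_le; lra|apply pow_le; lra]. Qed.

Lemma gsum_seq_sum_f n f : gsum (seq 0 (S n)) f = sum_f_R0 f n.
Proof. induction n. unfold gsum; simpl; lra. rewrite seq_sum_S, IHn. simpl. reflexivity. Qed.

Lemma seq_reflect N F : gsum (seq 0 (S N)) (fun j => F (N - j)%nat) = gsum (seq 0 (S N)) F.
Proof. induction N.
  - unfold gsum; simpl; reflexivity.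
  - rewrite (seq_sum_S (S N) F).
    rewrite <- (cons_seq (S N) 0), gsum_cons, <- seq_shift, gsum_map.
    replace (S N - 0)%nat with (S N) by lia.
    transitivity (F (S N) + gsum (seq 0 (S N)) (fun j => F (N - j)%nat)).
    + reflexivity.
    + rewrite IHN. lra. Qed.

Lemma coord_sum n e r M h : (n + e <= M)%nat ->
  gsum (seq 0 (S M)) (fun j => dep_pmf n r (Z.of_nat n + Z.of_nat e - Z.of_nat j) * h j) =
  sum_f_R0 (fun k => C n k * r ^ k * (1 - r) ^ (n - k) * h (n + e - k)%nat) n.
Proof. intros HM.
  rewrite (seq_restrict (n + e) M) by (auto; intros j Hj; rewrite dep_neg by lia; lra).
  set (F := fun k => dep_pmf n r (Z.of_nat k) * h (n + e - k)%nat).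
  transitivity (gsum (seq 0 (S (n + e))) (fun j => F (n + e - j)%nat)).
  - apply gsum_ext_in. intros j Hj. apply in_seq in Hj. unfold F.
    replace (Z.of_nat n + Z.of_nat e - Z.of_nat j)%Z with (Z.of_nat (n + e - j)) by lia.
    f_equal. f_equal. lia.
  - rewrite seq_reflect. rewrite (seq_restrict n (n+e)) by (try lia; intros j Hj; unfold F;
      rewrite dep_nat; rewrite (proj2 (Nat.leb_gt j n) Hj); lra).
    rewrite gsum_seq_sum_f. apply sum_eq. intros k Hk. unfold F. rewrite dep_nat.
    rewrite (proj2 (Nat.leb_le k n) Hk). reflexivity. Qed.

Lemma binom_sum1 n r : sum_f_R0 (fun k => C n k * r ^ k * (1 - r) ^ (n - k) * 1) n = 1.
Proof. transitivity ((r + (1 - r)) ^ n).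
  rewrite binomial. apply sum_eq. intros; ring.
  replace (r + (1 - r)) with 1 by ring. apply pow1. Qed.

Lemma exp_pow_INR x k : exp x ^ k = exp (INR k * x).
Proof. induction k. simpl. rewrite Rmult_0_l, exp_0. reflexivity.
  rewrite S_INR, <- tech_pow_Rmult, IHk. replace ((INR k + 1) * x) with (INR k * x + x) by ring.
  rewrite exp_plus. ring. Qed.

Lemma binom_exp n e r a :
  sum_f_R0 (fun k => C n k * r ^ k * (1 - r) ^ (n - k) * exp (a * INR (n + e - k))) n =
  exp (a * INR (n + e)) * (r * exp (- a) + (1 - r)) ^ n.
Proof. rewrite binomial, scal_sum. apply sum_eq. intros k Hk.
  replace (exp (a * INR (n + e - k))) with (exp (a * INR (n + e)) * exp (-a) ^ k).
  - rewrite Rpow_mult_distr. ring.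
  - rewrite exp_pow_INR, <- exp_plus. f_equal. rewrite minus_INR by lia. ring. Qed.


Definition ef (v : state -> nat) (x : state) (xi i : nat) : nat :=
  if Nat.eqb i (v x) then xi else 0%nat.
Definition tfac (q : nat -> R) v x xi i j :=
  dep_pmf (nth i x 0%nat) (q i / INR (nth i x 0%nat))
    (Z.of_nat (nth i x 0%nat) + Z.of_nat (ef v x xi i) - Z.of_nat j).

Lemma trans_eq I p q v x y : trans I p q v x y =
  gsum [0%nat;1%nat] (fun xi => arrival_pmf p xi * gprod (seq 0 I) (fun i => tfac q v x xi i (nth i y 0%nat))).
Proof. reflexivity. Qed.

Lemma ef_le v x xi i : (xi <= 1)%nat -> (ef v x xi i <= 1)%nat.
Proof. unfold ef; destruct (Nat.eqb i (v x)); lia. Qed.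

Lemma inb_false_exists N z : inb N z = false -> exists i, (i < length z)%nat /\ (N < nth i z 0%nat)%nat.
Proof. induction z as [|j l IH]; [discriminate|]. rewrite inb_cons. intros H.
  destruct (Nat.leb j N) eqn:E.
  - simpl in H. destruct (IH H) as [i [Hi1 Hi2]]. exists (S i). simpl; split; [lia|auto].
  - exists 0%nat. apply Nat.leb_gt in E. simpl; split; [lia|auto]. Qed.

Lemma nth_le_max x i : (nth i x 0 <= list_max x)%nat.
Proof. destruct (Nat.lt_ge_cases i (length x)).
  - assert (Hf := proj1 (list_max_le x (list_max x)) (Nat.le_refl _)).
    rewrite Forall_forall in Hf. apply Hf. apply nth_In; auto.
  - rewrite nth_overflow by auto. lia. Qed.

Lemma inb_max x : inb (list_max x) x = true.
Proof. apply forallb_forall. intros j Hj. apply Nat.leb_le.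
  assert (Hf := proj1 (list_max_le x (list_max x)) (Nat.le_refl _)).
  rewrite Forall_forall in Hf. auto. Qed.

Lemma max_le_inb N x : inb N x = true -> (list_max x <= N)%nat.
Proof. intros H. apply list_max_le. apply Forall_forall. intros j Hj.
  unfold inb in H. rewrite forallb_forall in H. apply Nat.leb_le. auto. Qed.

Lemma trans_zero_out I p q v x z : length z = I ->
  inb (S (list_max x)) z = false -> trans I p q v x z = 0.
Proof. intros Hz Hb. destruct (inb_false_exists _ _ Hb) as [i [Hi1 Hi2]].
  rewrite trans_eq. rewrite <- (gsum_zero [0%nat;1%nat]). apply gsum_ext_in.
  intros xi Hxi. rewrite (gprod_zero _ _ i). lra. apply in_seq; lia.
  unfold tfac. apply dep_neg. assert (Hm := nth_le_max x i).
  assert (ef v x xi i <= 1)%nat. apply ef_le. simpl in Hxi; lia. lia. Qed.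

Lemma Pf_box I p q v g x M : (S (list_max x) <= M)%nat ->
  Pf I p q v g x = gsum (box M I) (fun z => trans I p q v x z * g z).
Proof. intros HM. unfold Pf. change lsum with (@gsum state). symmetry. apply box_restrict; auto.
  intros z Hz Hb. rewrite trans_zero_out; auto. lra. Qed.

Lemma Pf_ext I p q v g h x : (forall z, valid I z -> g z = h z) -> Pf I p q v g x = Pf I p q v h x.
Proof. intros H. unfold Pf. change lsum with (@gsum state). apply gsum_ext_in. intros z Hz.
  apply box_in in Hz. rewrite H; auto. apply Hz. Qed.

Lemma Pf_lin I p q v g h c d x : Pf I p q v (fun z => c * g z + d * h z) x = c * Pf I p q v g x + d * Pf I p q v h x.
Proof. unfold Pf. change lsum with (@gsum state). rewrite <- !gsum_scal, <- gsum_plus. apply gsum_ext_in. intros; ring. Qed.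

Lemma Pf_gsum {A} I p q v (l : list A) (F : A -> state -> R) x :
  Pf I p q v (fun z => gsum l (fun y => F y z)) x = gsum l (fun y => Pf I p q v (F y) x).
Proof. unfold Pf. change lsum with (@gsum state).
  transitivity (gsum (box (S (list_max x)) I) (fun z => gsum l (fun y => trans I p q v x z * F y z))).
  apply gsum_ext_in; intros. rewrite <- gsum_scal. reflexivity. apply gsum_swap. Qed.



Lemma cv_const c : Un_cv (fun _ => c) c.
Proof. intros e He. exists 0%nat. intros. unfold Rdist. rewrite Rminus_diag, Rabs_R0. lra. Qed.

Lemma cv_ext_ev u w l N0 : (forall n, (n >= N0)%nat -> u n = w n) -> Un_cv u l -> Un_cv w l.
Proof. intros H Hu e He. destruct (Hu e He) as [N HN]. exists (max N N0). intros n Hn.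
  rewrite <- H by lia. apply HN; lia. Qed.

Lemma cv_eventually u l N0 : (forall n, (n >= N0)%nat -> u n = l) -> Un_cv u l.
Proof. intros H. apply (cv_ext_ev (fun _ => l) u l N0). intros; symmetry; auto. apply cv_const. Qed.

Lemma cv_shift u l : Un_cv u l -> Un_cv (fun n => u (S n)) l.
Proof. intros Hu e He. destruct (Hu e He) as [N HN]. exists N. intros n Hn. apply HN; lia. Qed.

Lemma cv_unshift u l : Un_cv (fun n => u (S n)) l -> Un_cv u l.
Proof. intros Hu e He. destruct (Hu e He) as [N HN]. exists (S N). intros n Hn.
  destruct n; [lia|]. apply HN; lia. Qed.

Lemma cv_scal c u l : Un_cv u l -> Un_cv (fun n => c * u n) (c * l).
Proof. intros H. apply (CV_mult (fun _ => c) u). apply cv_const. auto. Qed.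

Lemma lim_le u l B N0 : Un_cv u l -> (forall n, (n >= N0)%nat -> u n <= B) -> l <= B.
Proof. intros Hu H. destruct (Rle_or_lt l B); auto. exfalso.
  destruct (Hu (l - B) ltac:(lra)) as [N HN]. assert (H1 := HN (max N N0) ltac:(lia)).
  assert (H2 := H (max N N0) ltac:(lia)). unfold Rdist in H1.
  apply Rabs_def2 in H1. lra. Qed.

Lemma lim_ge u l B N0 : Un_cv u l -> (forall n, (n >= N0)%nat -> B <= u n) -> B <= l.
Proof. intros Hu H. destruct (Rle_or_lt B l); auto. exfalso.
  destruct (Hu (B - l) ltac:(lra)) as [N HN]. assert (H1 := HN (max N N0) ltac:(lia)).
  assert (H2 := H (max N N0) ltac:(lia)). unfold Rdist in H1.
  apply Rabs_def2 in H1. lra. Qed.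

Lemma lim_abs_le u l B N0 : Un_cv u l -> (forall n, (n >= N0)%nat -> Rabs (u n) <= B) -> Rabs l <= B.
Proof. intros Hu H. apply (lim_le (fun n => Rabs (u n)) _ B N0); auto. apply cv_cvabs; auto. Qed.


Lemma Rabs_le_b x b : Rabs x <= b -> -b <= x <= b.
Proof. unfold Rabs; destruct (Rcase_abs x); intros; lra. Qed.

Lemma cv_near u w e l : Un_cv w l -> Un_cv e 0 -> (forall n, Rabs (u n - w n) <= e n) -> Un_cv u l.
Proof. intros Hw He H eps Heps. destruct (Hw (eps/2) ltac:(lra)) as [N1 H1].
  destruct (He (eps/2) ltac:(lra)) as [N2 H2]. exists (max N1 N2). intros n Hn.
  assert (A1 := H1 n ltac:(lia)). assert (A2 := H2 n ltac:(lia)). assert (A3 := Rabs_le_b _ _ (H n)).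
  unfold Rdist in *. rewrite Rminus_0_r in A2. apply Rabs_def2 in A1. apply Rabs_def2 in A2.
  apply Rabs_def1; lra. Qed.

Lemma cv_gsum {A} (l : list A) F G : (forall y, In y l -> Un_cv (fun t => F t y) (G y)) ->
  Un_cv (fun t => gsum l (F t)) (gsum l G).
Proof. induction l; intros H.
  - rewrite gsum_nil. apply (cv_ext_ev (fun _ => 0) _ _ 0). intros; rewrite gsum_nil; auto. apply cv_const.
  - rewrite gsum_cons. apply (cv_ext_ev (fun t => F t a + gsum l (F t)) _ _ 0). intros; rewrite gsum_cons; auto.
    apply CV_plus. apply H; left; auto. apply IHl. intros; apply H; right; auto. Qed.

Lemma cv_geom r c : 0 <= r < 1 -> Un_cv (fun n => r ^ n * c) 0.
Proof. intros Hr. rewrite <- (Rmult_0_l c). apply (CV_mult (fun n => r ^ n) (fun _ => c)); [|apply cv_const].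
  intros e He. destruct (pow_lt_1_zero r ltac:(rewrite Rabs_right; lra) e He) as [N HN].
  exists N. intros n Hn. unfold Rdist. rewrite Rminus_0_r. auto. Qed.

Lemma geom_small r c e : 0 <= r < 1 -> 0 < e -> exists n, r ^ n * c < e.
Proof. intros Hr He. destruct (cv_geom r c Hr e He) as [N HN]. exists N.
  assert (H := HN N (le_n _)). unfold Rdist in H. rewrite Rminus_0_r in H.
  apply Rabs_def2 in H. lra. Qed.


Lemma inb_mono N M z : (N <= M)%nat -> inb N z = true -> inb M z = true.
Proof. unfold inb. rewrite !forallb_forall. intros H1 H2 j Hj. apply Nat.leb_le.
  apply H2 in Hj. apply Nat.leb_le in Hj. lia. Qed.

Lemma theta_valid I : valid I (theta I).
Proof. unfold valid, theta. apply repeat_length. Qed.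

Lemma inb_theta N I : inb N (theta I) = true.
Proof. unfold inb, theta. apply forallb_forall. intros j Hj. apply repeat_spec in Hj. subst. reflexivity. Qed.

Lemma theta_in_box N I : In (theta I) (box N I).
Proof. apply box_in. split. apply theta_valid. apply inb_theta. Qed.

Lemma nth_theta I i : nth i (theta I) 0%nat = 0%nat.
Proof. unfold theta. apply nth_repeat. Qed.

Lemma max_theta I : list_max (theta I) = 0%nat.
Proof. apply Nat.le_0_r. apply max_le_inb. apply inb_theta. Qed.

Section Q.
Variables (I : nat) (p : R) (q : nat -> R) (a : R).
Hypothesis HI : (1 <= I)%nat.
Hypothesis Hp : 0 < p < 1.
Hypothesis Hq0 : q 0%nat < 1.
Hypothesis Hqdec : forall i, (S i < I)%nat -> q (S i) < q i.
Hypothesis HqI : 2 * p < q (I - 1)%nat.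
Hypothesis Ha : 0 < a.
Hypothesis Hadrift : p * (exp a - 1) < q (I - 1)%nat / 2 * (1 - exp (- a)).

Lemma q_lower i : (i < I)%nat -> q (I - 1)%nat <= q i.
Proof. intros Hi. remember (I - 1 - i)%nat as d. revert i Hi Heqd. induction d; intros i Hi Hd.
  - replace i with (I - 1)%nat by lia. lra.
  - assert (q (S i) < q i) by (apply Hqdec; lia). assert (q (I-1)%nat <= q (S i)) by (apply IHd; lia). lra. Qed.

Lemma q_upper i : q i <= q 0%nat.
Proof. induction i. lra. destruct (Nat.lt_ge_cases (S i) I).
  - assert (q (S i) < q i) by (apply Hqdec; auto). lra.
  -
Abort.

Lemma q_upper i : (i < I)%nat -> q i <= q 0%nat.
Proof. induction i; intros Hi. lra. assert (q (S i) < q i) by (apply Hqdec; auto).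
  assert (q i <= q 0%nat) by (apply IHi; lia). lra. Qed.

Lemma q_pos i : (i < I)%nat -> 0 < q i.
Proof. intros Hi. assert (H := q_lower i Hi). lra. Qed.
Lemma q_lt1 i : (i < I)%nat -> q i < 1.
Proof. intros Hi. assert (H := q_upper i Hi). lra. Qed.

Lemma r_ok i n : (i < I)%nat -> (n = 0%nat \/ 0 <= q i / INR n <= 1).
Proof. intros Hi. destruct n; [left; auto|right].
  assert (0 < q i) by (apply q_pos; auto). assert (q i < 1) by (apply q_lt1; auto).
  assert (1 <= INR (S n)) by (rewrite S_INR; assert (0 <= INR n) by apply pos_INR; lra).
  split. unfold Rdiv; apply Rmult_le_pos; [lra|]; apply Rlt_le, Rinv_0_lt_compat; lra. apply Rle_trans with (q i); [|lra].
  unfold Rdiv. rewrite <- (Rmult_1_r (q i)) at 2. apply Rmult_le_compat_l; [lra|].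
  rewrite <- Rinv_1. apply Rinv_le_contravar; lra. Qed.

Lemma arrival_nonneg xi : 0 <= arrival_pmf p xi.
Proof. unfold arrival_pmf; destruct (Nat.eqb xi 1); lra. Qed.

Lemma trans_nonneg v x y : 0 <= trans I p q v x y.
Proof. rewrite trans_eq. apply gsum_nonneg. intros xi _. apply Rmult_le_pos. apply arrival_nonneg.
  apply gprod_nonneg. intros i Hi. apply in_seq in Hi. unfold tfac. apply dep_nonneg. apply r_ok; lia. Qed.

Lemma Pf_mono v g h x : (forall z, valid I z -> g z <= h z) -> Pf I p q v g x <= Pf I p q v h x.
Proof. intros H. unfold Pf. change lsum with (@gsum state). apply gsum_le_in. intros z Hz.
  apply box_in in Hz. apply Rmult_le_compat_l. apply trans_nonneg. apply H. apply Hz. Qed.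

Lemma Pf_nonneg v g x : (forall z, valid I z -> 0 <= g z) -> 0 <= Pf I p q v g x.
Proof. intros H. unfold Pf. change lsum with (@gsum state). apply gsum_nonneg. intros z Hz.
  apply box_in in Hz. apply Rmult_le_pos. apply trans_nonneg. apply H. apply Hz. Qed.

Lemma gprod_pick k i0 (f : nat -> R) c : (i0 < k)%nat ->
  gprod (seq 0 k) (fun i => f i * (if Nat.eqb i i0 then c else 1)) = gprod (seq 0 k) f * c.
Proof. induction k; intros Hk; [lia|]. rewrite !seq_S, !gprod_app. unfold gprod at 2 4; simpl.
  destruct (Nat.eq_dec i0 k).
  - subst. rewrite Nat.eqb_refl.
    rewrite (gprod_ext_in _ _ f). ring. intros i Hi. apply in_seq in Hi.
    rewrite (proj2 (Nat.eqb_neq i k)) by lia. ring.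
  - rewrite IHk by lia. rewrite (proj2 (Nat.eqb_neq k i0)) by lia. ring. Qed.

Definition csum (v : state -> nat) x xi i (G : nat -> R) :=
  sum_f_R0 (fun k => C (nth i x 0%nat) k * (q i / INR (nth i x 0%nat)) ^ k *
     (1 - q i / INR (nth i x 0%nat)) ^ (nth i x 0%nat - k) * G (nth i x 0%nat + ef v x xi i - k)%nat) (nth i x 0%nat).

Lemma Pf_marginal v x i0 G : valid I x -> (i0 < I)%nat ->
  Pf I p q v (fun z => G (nth i0 z 0%nat)) x =
  gsum [0%nat;1%nat] (fun xi => arrival_pmf p xi * csum v x xi i0 G).
Proof. intros Hx Hi0. unfold Pf. change lsum with (@gsum state).
  transitivity (gsum (box (S (list_max x)) I) (fun z => gsum [0%nat;1%nat] (fun xi =>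
     arrival_pmf p xi * gprod (seq 0 I) (fun i => tfac q v x xi i (nth i z 0%nat) *
       (if Nat.eqb i i0 then G (nth i z 0%nat) else 1))))).
  { apply gsum_ext_in. intros z _. rewrite trans_eq. rewrite Rmult_comm, <- gsum_scal.
    apply gsum_ext_in. intros xi _.
    rewrite (gprod_ext_in (seq 0 I) (fun i => tfac q v x xi i (nth i z 0%nat) * (if Nat.eqb i i0 then G (nth i z 0%nat) else 1))
      (fun i => tfac q v x xi i (nth i z 0%nat) * (if Nat.eqb i i0 then G (nth i0 z 0%nat) else 1))).
    rewrite gprod_pick by auto. ring.
    intros i _. destruct (Nat.eqb i i0) eqn:E; auto. apply Nat.eqb_eq in E; subst; auto. }
  rewrite gsum_swap. apply gsum_ext_in. intros xi Hxi. rewrite gsum_scal. f_equal.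
  rewrite (box_prod _ _ (fun i j => tfac q v x xi i j * (if Nat.eqb i i0 then G j else 1))).
  transitivity (gprod (seq 0 I) (fun i => 1 * (if Nat.eqb i i0 then csum v x xi i0 G else 1))).
  - apply gprod_ext_in. intros i Hi. apply in_seq in Hi. unfold tfac.
    assert (Hm := nth_le_max x i). assert (He : (ef v x xi i <= 1)%nat) by (apply ef_le; simpl in Hxi; lia).
    destruct (Nat.eqb i i0) eqn:E.
    + apply Nat.eqb_eq in E; subst. rewrite coord_sum by lia. unfold csum. ring.
    + rewrite (coord_sum _ _ _ _ (fun _ => 1)) by lia. rewrite (binom_sum1 _ _). ring.
  - rewrite gprod_pick by auto. rewrite gprod_one. ring. Qed.

Lemma Pf_one v x : valid I x -> Pf I p q v (fun _ => 1) x = 1.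
Proof. intros Hx.
  transitivity (gsum [0%nat;1%nat] (fun xi => arrival_pmf p xi * csum v x xi 0 (fun _ => 1))).
  exact (Pf_marginal v x 0 (fun _ => 1) Hx ltac:(lia)).
  unfold csum. rewrite !binom_sum1. unfold gsum, arrival_pmf; simpl. lra. Qed.

Lemma Pf_scal v g c x : Pf I p q v (fun z => c * g z) x = c * Pf I p q v g x.
Proof. unfold Pf. change lsum with (@gsum state). rewrite <- gsum_scal. apply gsum_ext_in. intros; ring. Qed.

Lemma Pf_plus v g h x : Pf I p q v (fun z => g z + h z) x = Pf I p q v g x + Pf I p q v h x.
Proof. unfold Pf. change lsum with (@gsum state). rewrite <- gsum_plus. apply gsum_ext_in. intros; ring. Qed.

Lemma Pf_minus v g h x : Pf I p q v (fun z => g z - h z) x = Pf I p q v g x - Pf I p q v h x.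
Proof. unfold Pf. change lsum with (@gsum state). rewrite <- gsum_minus. apply gsum_ext_in. intros; ring. Qed.

Lemma Pf_const v c x : valid I x -> Pf I p q v (fun _ => c) x = c.
Proof. intros Hx. rewrite (Pf_ext _ _ _ _ _ (fun z => c * (fun _ => 1) z)) by (intros; ring).
  rewrite Pf_scal, Pf_one by auto. ring. Qed.

Lemma Pf_abs v g x : Rabs (Pf I p q v g x) <= Pf I p q v (fun z => Rabs (g z)) x.
Proof. unfold Pf. change lsum with (@gsum state). eapply Rle_trans; [apply gsum_abs|].
  apply gsum_le_in. intros z _. rewrite Rabs_mult. rewrite (Rabs_right (trans I p q v x z)). lra.
  apply Rle_ge, (trans_nonneg v). Qed.

Lemma Pf_indic v x y : valid I y -> Pf I p q v (indic y) x = trans I p q v x y.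
Proof. intros Hy. unfold Pf. change lsum with (@gsum state).
  rewrite (gsum_ext_in _ _ (fun z => trans I p q v x z * indic z y)) by (intros; rewrite indic_sym; auto).
  rewrite (box_single _ _ (fun z => trans I p q v x z) y) by auto.
  destruct (inb (S (list_max x)) y) eqn:E; auto. rewrite trans_zero_out; auto. Qed.

Lemma trans_le1 v x y : valid I x -> valid I y -> trans I p q v x y <= 1.
Proof. intros Hx Hy. rewrite <- (Pf_indic v x y Hy). rewrite <- (Pf_one v x Hx). apply (Pf_mono v).
  intros; unfold indic; destruct (list_eq_dec Nat.eq_dec z y); lra. Qed.

Lemma trans_theta_lower v x : trans I p q v x (theta I) >=
  (1 - p) * gprod (seq 0 I) (fun i => (q i / INR (nth i x 0%nat)) ^ (nth i x 0%nat)).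
Proof. rewrite trans_eq. rewrite gsum_cons, gsum_cons, gsum_nil. unfold arrival_pmf; simpl Nat.eqb.
  cbv iota. apply Rle_ge.
  assert (0 <= p * gprod (seq 0 I) (fun i => tfac q v x 1 i (nth i (theta I) 0%nat))).
  { apply Rmult_le_pos; [lra|]. apply gprod_nonneg. intros i Hi. apply in_seq in Hi. unfold tfac.
    apply dep_nonneg. apply r_ok; lia. }
  enough (gprod (seq 0 I) (fun i => tfac q v x 0 i (nth i (theta I) 0%nat)) =
     gprod (seq 0 I) (fun i => (q i / INR (nth i x 0%nat)) ^ (nth i x 0%nat))) by (rewrite H0; lra).
  apply gprod_ext_in. intros i _. unfold tfac, ef. rewrite nth_theta.
  replace (Z.of_nat (nth i x 0%nat) + Z.of_nat (if (i =? v x)%nat then 0%nat else 0%nat) - Z.of_nat 0)%Z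
    with (Z.of_nat (nth i x 0%nat)) by (destruct (i =? v x)%nat; lia).
  rewrite dep_nat, Nat.leb_refl, Nat.sub_diag. unfold C. rewrite Nat.sub_diag. simpl. field.
  repeat split; apply not_0_INR, fact_neq_0. Qed.

Lemma expect_ext v t g h x : (forall z, valid I z -> g z = h z) -> valid I x -> expect I p q v t g x = expect I p q v t h x.
Proof. intros H. revert x. induction t; intros x Hx; simpl; auto. apply Pf_ext. intros; apply IHt; auto. Qed.

Lemma expect_scal v t g c x : expect I p q v t (fun z => c * g z) x = c * expect I p q v t g x.
Proof. revert x; induction t; intros x; simpl; auto. rewrite <- Pf_scal. apply Pf_ext. intros; apply IHt. Qed.

Lemma expect_plus v t g h x : expect I p q v t (fun z => g z + h z) x = expect I p q v t g x + expect I p q v t h x.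
Proof. revert x; induction t; intros x; simpl; auto. rewrite <- Pf_plus. apply Pf_ext. intros; apply IHt. Qed.

Lemma expect_minus v t g h x : expect I p q v t (fun z => g z - h z) x = expect I p q v t g x - expect I p q v t h x.
Proof. revert x; induction t; intros x; simpl; auto. rewrite <- Pf_minus. apply Pf_ext. intros; apply IHt. Qed.

Lemma expect_const v t c x : valid I x -> expect I p q v t (fun _ => c) x = c.
Proof. revert x; induction t; intros x Hx; simpl; auto.
  rewrite (Pf_ext _ _ _ _ _ (fun _ => c)). apply Pf_const; auto. intros; apply IHt; auto. Qed.

Lemma expect_mono v t g h x : (forall z, valid I z -> g z <= h z) -> valid I x -> expect I p q v t g x <= expect I p q v t h x.
Proof. intros H. revert x. induction t; intros x Hx; simpl; auto.
  apply (Pf_mono v). intros; apply IHt; auto. Qed.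

Lemma expect_abs v t g x : valid I x -> Rabs (expect I p q v t g x) <= expect I p q v t (fun z => Rabs (g z)) x.
Proof. revert x. induction t; intros x Hx; simpl; [lra|].
  eapply Rle_trans. apply Pf_abs. apply (Pf_mono v). intros; apply IHt; auto. Qed.

Lemma expect_gsum v {A} t (l : list A) F x :
  expect I p q v t (fun z => gsum l (fun y => F y z)) x = gsum l (fun y => expect I p q v t (F y) x).
Proof. revert x; induction t; intros x; simpl; auto.
  rewrite <- Pf_gsum. apply Pf_ext. intros; apply IHt. Qed.

Lemma expect_comp v s t g x : expect I p q v (s + t) g x = expect I p q v s (expect I p q v t g) x.
Proof. revert x; induction s; intros x; simpl; auto. apply Pf_ext. intros; apply IHs. Qed.

Lemma expect_S v t g x : expect I p q v (S t) g x = expect I p q v t (Pf I p q v g) x.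
Proof. rewrite <- Nat.add_1_r, expect_comp. reflexivity. Qed.

Lemma expect_local v t g h x : valid I x ->
  (forall z, valid I z -> inb (list_max x + t) z = true -> g z = h z) -> expect I p q v t g x = expect I p q v t h x.
Proof. revert x. induction t; intros x Hx H; simpl.
  - apply H; auto. rewrite Nat.add_0_r. apply inb_max.
  - unfold Pf. change lsum with (@gsum state). apply gsum_ext_in. intros z Hz.
    apply box_in in Hz. destruct Hz as [Hz1 Hz2]. f_equal. apply IHt; auto.
    intros w Hw Hb. apply H; auto. eapply inb_mono; [|apply Hb].
    assert (Hm := max_le_inb _ _ Hz2). lia. Qed.

Lemma Pn_S v t x y : valid I x -> valid I y -> Pn I p q v (S t) x y = expect I p q v t (fun z => trans I p q v z y) x.
Proof. intros Hx Hy. unfold Pn. rewrite expect_S. apply expect_ext; auto. intros; apply Pf_indic; auto. Qed.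



Lemma exp_le x y : x <= y -> exp x <= exp y.
Proof. intros [H|H]. apply Rlt_le, exp_increasing; auto. subst; lra. Qed.

Lemma Phi_eq z : Phi I a z = gsum (seq 0 I) (fun i => exp (a * INR (nth i z 0%nat))).
Proof. unfold Phi. apply fold_plus_map. Qed.

Lemma Phi_ge_term z i : (i < I)%nat -> exp (a * INR (nth i z 0%nat)) <= Phi I a z.
Proof. intros Hi. rewrite Phi_eq. apply (gsum_single_le _ (fun i => exp (a * INR (nth i z 0%nat)))).
  intros; apply Rlt_le, exp_pos. apply in_seq; lia. Qed.

Lemma exp_ge1 n : 1 <= exp (a * INR n).
Proof. rewrite <- exp_0. apply exp_le. apply Rmult_le_pos; [lra|apply pos_INR]. Qed.

Lemma Phi_ge1 z : 1 <= Phi I a z.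
Proof. eapply Rle_trans; [apply (exp_ge1 (nth 0 z 0%nat))|]. apply Phi_ge_term; lia. Qed.

Lemma Phi_nonneg z : 0 <= Phi I a z.
Proof. assert (H := Phi_ge1 z). lra. Qed.

Lemma Phi_theta : Phi I a (theta I) = INR I.
Proof. rewrite Phi_eq. rewrite (gsum_ext_in _ _ (fun _ => 1)). rewrite gsum_const, length_seq. ring.
  intros i _. rewrite nth_theta. simpl. rewrite Rmult_0_r. apply exp_0. Qed.

Lemma Phi_box z N : inb N z = true -> Phi I a z <= INR I * exp (a * INR N).
Proof. intros H. rewrite Phi_eq. rewrite <- (length_seq I 0) at 2. rewrite <- gsum_const.
  apply gsum_le_in. intros i _. apply exp_le. apply Rmult_le_compat_l; [lra|]. apply le_INR.
  destruct (Nat.lt_ge_cases i (length z)).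
  - unfold inb in H. rewrite forallb_forall in H. apply Nat.leb_le. apply H. apply nth_In; auto.
  - rewrite nth_overflow by auto. lia. Qed.

Lemma coord_le_Phi z i : (i < I)%nat -> a * INR (nth i z 0%nat) <= Phi I a z.
Proof. intros Hi. eapply Rle_trans; [|apply Phi_ge_term; eauto].
  eapply Rle_trans; [|apply exp_ineq1_le]. lra. Qed.

Definition uu := p * (exp a - 1).
Definition ww := q (I - 1)%nat / 2 * (1 - exp (- a)).
Definition gam := (1 + uu) * (1 - ww).
Definition bb := INR I * (1 + uu).

Lemma expa_gt1 : 1 < exp a.
Proof. rewrite <- exp_0. apply exp_increasing; lra. Qed.
Lemma expna : 0 < exp (- a) < 1.
Proof. split. apply exp_pos. rewrite <- exp_0. apply exp_increasing; lra. Qed.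

Lemma uu_pos : 0 < uu.
Proof. unfold uu. assert (H := expa_gt1). apply Rmult_lt_0_compat; lra. Qed.

Lemma qI_bounds : 0 < q (I - 1)%nat < 1.
Proof. split. apply q_pos; lia. apply q_lt1; lia. Qed.

Lemma ww_bounds : 0 < ww < 1/2.
Proof. unfold ww. assert (H := expna). assert (H2 := qI_bounds). split.
  apply Rmult_lt_0_compat; lra.
  apply Rlt_le_trans with (q (I - 1)%nat / 2 * 1). apply Rmult_lt_compat_l; lra. lra. Qed.

Lemma gam_bounds : 0 < gam < 1.
Proof. unfold gam. assert (H := uu_pos). assert (H2 := ww_bounds). split.
  apply Rmult_lt_0_compat; lra. unfold uu, ww in *. nra. Qed.

Lemma bb_ge1 : 1 <= bb.
Proof. unfold bb. assert (H := uu_pos). assert (1 <= INR I) by (apply (le_INR 1); auto).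
  nra. Qed.

Lemma F_bound s n : 0 <= s <= 1 -> (1 <= n)%nat -> (1 - s / INR n) ^ n <= 1 - s / 2.
Proof. intros Hs Hn. assert (Hn' : 1 <= INR n) by (apply (le_INR 1); auto).
  set (t := s / INR n). assert (Ht : 0 <= t <= 1).
  { unfold t. split. unfold Rdiv; apply Rmult_le_pos; [lra|apply Rlt_le, Rinv_0_lt_compat; lra].
    apply Rle_trans with (s / 1); [|lra]. unfold Rdiv; apply Rmult_le_compat_l; [lra|].
    apply Rinv_le_contravar; lra. }
  assert (Hs' : s = INR n * t) by (unfold t; field; lra).
  assert (H1 : (1 - t) ^ n * (1 + t) ^ n <= 1).
  { rewrite <- Rpow_mult_distr. apply Rle_trans with (1 ^ n). apply pow_incr. nra. rewrite pow1; lra. }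
  assert (H2 : 1 + s <= (1 + t) ^ n).
  { destruct (Req_dec t 0) as [E|E]. rewrite Hs', E, Rmult_0_r, !Rplus_0_r. rewrite pow1. lra.
    rewrite Hs'. apply poly. lra. }
  assert (H3 : 0 <= (1 - t) ^ n) by (apply pow_le; lra).
  assert ((1 - t) ^ n * (1 + s) <= 1) by (eapply Rle_trans; [|apply H1]; apply Rmult_le_compat_l; auto).
  nra. Qed.

Lemma drift v x : valid I x -> Pf I p q v (Phi I a) x <= gam * Phi I a x + bb.
Proof. intros Hx.
  rewrite (Pf_ext _ _ _ _ _ (fun z => gsum (seq 0 I) (fun i => exp (a * INR (nth i z 0%nat))))) by (intros; apply Phi_eq).
  rewrite Pf_gsum. rewrite Phi_eq. unfold bb.
  replace (INR I * (1+uu)) with (gsum (seq 0 I) (fun _ => 1 + uu)) by (rewrite gsum_const, length_seq; ring).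
  rewrite <- gsum_scal, <- gsum_plus.
  apply gsum_le_in. intros i Hi. apply in_seq in Hi.
  transitivity (gsum [0%nat;1%nat] (fun xi => arrival_pmf p xi * csum v x xi i (fun j => exp (a * INR j)))).
  { right. exact (Pf_marginal v x i (fun j => exp (a * INR j)) Hx ltac:(lia)). }
  unfold csum. cbv beta. rewrite gsum_cons, gsum_cons, gsum_nil. unfold arrival_pmf. simpl Nat.eqb. cbv iota.
  rewrite !binom_exp.
  set (n := nth i x 0%nat). set (r := q i / INR n).
  set (B := (r * exp (- a) + (1 - r)) ^ n).
  assert (HB : 0 <= B /\ B <= (if Nat.eqb n 0 then 1 else 1 - ww)).
  { assert (Hq := q_lower i ltac:(lia)). assert (Hq1 := q_lt1 i ltac:(lia)). assert (Hna := expna).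
    destruct (Nat.eqb n 0) eqn:E.
    - apply Nat.eqb_eq in E. unfold B. rewrite E. simpl. lra.
    - apply Nat.eqb_neq in E. assert (Hr := r_ok i n ltac:(lia)). destruct Hr as [Hr|Hr]; [lia|].
      fold r in Hr. unfold B. split. apply pow_le. nra.
      replace (r * exp (- a) + (1 - r)) with (1 - (q i * (1 - exp (-a))) / INR n) by (unfold r; field; apply not_0_INR; auto).
      eapply Rle_trans. apply F_bound; [split; [apply Rmult_le_pos|]; try nra|lia].
      assert (q i * (1 - exp (-a)) >= q (I-1)%nat * (1 - exp (-a))) by (apply Rle_ge, Rmult_le_compat_r; lra).
      unfold ww. lra. }
  assert (He1 : (ef v x 1 i <= 1)%nat) by (apply ef_le; lia).
  assert (Hexp1 : exp (a * INR (n + ef v x 1 i)) <= exp (a * INR n) * exp a).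
  { rewrite <- exp_plus. apply exp_le. rewrite plus_INR. assert (INR (ef v x 1 i) <= 1) by (apply (le_INR _ 1); auto). nra. }
  assert (Hexp0 : ef v x 0 i = 0%nat) by (unfold ef; destruct (i =? v x)%nat; auto).
  rewrite Hexp0, Nat.add_0_r. fold B.
  assert (Hen : 0 < exp (a * INR n)) by apply exp_pos.
  assert (Hu := uu_pos). assert (Hg := gam_bounds).
  assert (p * (exp (a * INR (n + ef v x 1 i)) * B) <= p * exp (a * INR n) * exp a * B).
  { rewrite Rmult_assoc, Rmult_assoc. apply Rmult_le_compat_l; [lra|]. rewrite <- Rmult_assoc.
    apply Rmult_le_compat_r; [lra|auto]. }
  assert (Hsum : (1 - p) * (exp (a * INR n) * B) + p * (exp (a * INR (n + ef v x 1 i)) * B) + 0 <=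
     (1 + uu) * exp (a * INR n) * B) by (unfold uu; nra).
  destruct (Nat.eqb n 0) eqn:E.
  - apply Nat.eqb_eq in E. rewrite E in *. simpl INR in *. rewrite Rmult_0_r, exp_0 in *.
    assert ((1 + uu) * 1 * B <= 1 + uu) by nra. nra.
  - assert ((1 + uu) * exp (a * INR n) * B <= (1 + uu) * exp (a * INR n) * (1 - ww)).
    { apply Rmult_le_compat_l; [nra|tauto]. }
    unfold gam. nra. Qed.

Definition Rr := 4 * (1 + bb) / (1 - gam).
Definition Mx := S (Z.to_nat (up (Rr / a))).
Definition rho0 := q (I - 1)%nat / INR Mx.
Definition alpha := (1 - p) * (rho0 ^ Mx) ^ I.

Lemma up_nat r : r <= INR (Z.to_nat (up r)).
Proof. destruct (archimed r) as [H1 _]. destruct (Z_lt_le_dec (up r) 0).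
  - assert (IZR (up r) < 0) by (apply IZR_lt; auto). assert (0 <= INR (Z.to_nat (up r))) by apply pos_INR. lra.
  - rewrite INR_IZR_INZ, Z2Nat.id by auto. lra. Qed.

Lemma Mx_ge1 : 1 <= INR Mx.
Proof. unfold Mx. rewrite S_INR. assert (H := pos_INR (Z.to_nat (up (Rr / a)))). lra. Qed.

Lemma rho0_bounds : 0 < rho0 <= 1.
Proof. unfold rho0. assert (H := Mx_ge1). assert (H2 := qI_bounds). split.
  unfold Rdiv; apply Rmult_lt_0_compat; [lra|apply Rinv_0_lt_compat; lra].
  apply Rle_trans with (q (I-1)%nat / 1); [|lra]. unfold Rdiv; apply Rmult_le_compat_l; [lra|].
  apply Rinv_le_contravar; lra. Qed.

Lemma pow_decr r n m : 0 <= r <= 1 -> (n <= m)%nat -> r ^ m <= r ^ n.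
Proof. intros Hr Hnm. replace m with (n + (m - n))%nat by lia. rewrite pow_add.
  assert (r ^ (m - n) <= 1) by (apply Rle_trans with (1 ^ (m - n)); [apply pow_incr; lra|rewrite pow1; lra]).
  assert (0 <= r ^ n) by (apply pow_le; lra). nra. Qed.

Lemma alpha_bounds : 0 < alpha <= 1.
Proof. unfold alpha. assert (H := rho0_bounds). split.
  apply Rmult_lt_0_compat; [lra|]. apply pow_lt, pow_lt; lra.
  assert ((rho0 ^ Mx) ^ I <= 1). { apply Rle_trans with (1 ^ I); [|rewrite pow1; lra]. apply pow_incr. split. apply pow_le; lra.
    apply Rle_trans with (1 ^ Mx); [|rewrite pow1; lra]. apply pow_incr; lra. }
  assert (0 <= (rho0 ^ Mx) ^ I) by (apply pow_le, pow_le; lra). nra. Qed.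

Lemma coord_le_Mx x i : Phi I a x <= Rr -> (i < I)%nat -> (nth i x 0%nat <= Mx)%nat.
Proof. intros HR Hi. assert (H := coord_le_Phi x i Hi).
  assert (INR (nth i x 0%nat) <= INR Mx).
  { unfold Mx. rewrite S_INR. assert (H2 := up_nat (Rr / a)).
    assert (INR (nth i x 0%nat) <= Rr / a). { apply (Rmult_le_reg_l a); auto. unfold Rdiv. rewrite <- Rmult_assoc, (Rmult_comm a Rr), Rmult_assoc, Rinv_r; lra. }
    lra. }
  apply INR_le; auto. Qed.

Lemma trans_theta_alpha v x : valid I x -> Phi I a x <= Rr -> alpha <= trans I p q v x (theta I).
Proof. intros Hx HR. eapply Rle_trans; [|apply Rge_le, trans_theta_lower]. unfold alpha.
  apply Rmult_le_compat_l; [lra|]. replace ((rho0 ^ Mx) ^ I) with ((rho0 ^ Mx) ^ length (seq 0 I)) by (rewrite length_seq; auto). apply gprod_ge.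
  apply pow_le; apply Rlt_le, rho0_bounds.
  intros i Hi. apply in_seq in Hi. assert (HM := coord_le_Mx x i HR ltac:(lia)).
  assert (Hr := rho0_bounds).
  destruct (nth i x 0%nat) as [|n] eqn:E.
  - rewrite pow_O. apply Rle_trans with (1 ^ Mx); [|rewrite pow1; lra]. apply pow_incr; lra.
  - apply Rle_trans with (rho0 ^ S n). apply pow_decr; [lra|auto]. apply pow_incr. split; [lra|].
    unfold rho0. assert (Hq := q_lower i ltac:(lia)). assert (Hq2 := qI_bounds).
    assert (1 <= INR (S n)) by (rewrite S_INR; assert (H0 := pos_INR n); lra).
    assert (INR (S n) <= INR Mx) by (apply le_INR; auto).
    unfold Rdiv. apply Rmult_le_compat; try lra. apply Rlt_le, Rinv_0_lt_compat; lra.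
    apply Rinv_le_contravar; lra. Qed.

Lemma minor v x g : valid I x -> Phi I a x <= Rr -> (forall z, valid I z -> 0 <= g z) ->
  alpha * g (theta I) <= Pf I p q v g x.
Proof. intros Hx HR Hg. eapply Rle_trans with (trans I p q v x (theta I) * g (theta I)).
  apply Rmult_le_compat_r. apply Hg, theta_valid. apply trans_theta_alpha; auto.
  unfold Pf. change lsum with (@gsum state). apply (gsum_single_le _ (fun z => trans I p q v x z * g z)).
  intros z Hz. apply box_in in Hz. apply Rmult_le_pos. apply trans_nonneg. apply Hg, Hz. apply theta_in_box. Qed.

Lemma Rabs_le_between x b : Rabs x <= b -> -b <= x <= b.
Proof. unfold Rabs; destruct (Rcase_abs x); intros; lra. Qed.
Lemma Rabs_sub_le x y : Rabs (x - y) <= Rabs x + Rabs y.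
Proof. unfold Rabs; destruct (Rcase_abs (x - y)); destruct (Rcase_abs x); destruct (Rcase_abs y); lra. Qed.

(* ===== contraction (Hairer-Mattingly) ===== *)
Definition beta := alpha / (2 * bb + 2).
Definition abar := Rmax (1 - beta) ((1 + gam) / 2).

Lemma beta_bounds : 0 < beta /\ 2 * beta * bb < alpha /\ beta <= alpha / 2.
Proof. unfold beta. assert (H := alpha_bounds). assert (H2 := bb_ge1).
  split. apply Rmult_lt_0_compat; [lra|apply Rinv_0_lt_compat; lra].
  split. apply (Rmult_lt_reg_r (2 * bb + 2)); [lra|]. unfold Rdiv. field_simplify; nra.
  apply (Rmult_le_reg_r (2 * bb + 2)); [lra|]. unfold Rdiv. field_simplify; nra. Qed.

Lemma abar_bounds : 0 < abar < 1 /\ 1 - beta <= abar /\ (1 + gam) / 2 <= abar.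
Proof. unfold abar. assert (H := beta_bounds). assert (H2 := gam_bounds). assert (H3 := alpha_bounds).
  split; [split|split]. eapply Rlt_le_trans; [|apply Rmax_r]; lra.
  apply Rmax_lub_lt; lra. apply Rmax_l. apply Rmax_r. Qed.

Lemma Rr_pos : 0 < Rr.
Proof. unfold Rr. assert (H := bb_ge1). assert (H2 := gam_bounds). apply Rmult_lt_0_compat; [lra|apply Rinv_0_lt_compat; lra]. Qed.

Definition Lip (f : state -> R) (L : R) := forall x y, valid I x -> valid I y ->
  Rabs (f x - f y) <= L * (2 + beta * Phi I a x + beta * Phi I a y).

Lemma lip_center f L : Lip f L -> exists c, forall z, valid I z -> Rabs (f z - c) <= L * (1 + beta * Phi I a z).
Proof. intros HL.
  set (E := fun r => exists z, valid I z /\ r = f z - L * (1 + beta * Phi I a z)).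
  assert (Hb : bound E).
  { exists (f (theta I) + L * (1 + beta * Phi I a (theta I))). intros r [z [Hz ->]].
    assert (H := HL z (theta I) Hz (theta_valid I)). apply Rabs_le_between in H. nra. }
  assert (Hne : exists r, E r) by (exists (f (theta I) - L * (1 + beta * Phi I a (theta I))); exists (theta I); split; auto; apply theta_valid).
  destruct (completeness E Hb Hne) as [m [Hm1 Hm2]].
  exists m. intros z Hz. apply Rabs_le. split.
  - assert (m <= f z + L * (1 + beta * Phi I a z)).
    { apply Hm2. intros r [w [Hw ->]]. assert (H := HL w z Hw Hz). apply Rabs_le_between in H. nra. }
    lra.
  - assert (f z - L * (1 + beta * Phi I a z) <= m) by (apply Hm1; exists z; auto). lra. Qed.

Lemma Lip_nonneg f L : Lip f L -> 0 <= L.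
Proof. intros H. assert (H1 := H (theta I) (theta I) (theta_valid I) (theta_valid I)).
  assert (H2 := Phi_nonneg (theta I)). assert (H3 := beta_bounds).
  assert (0 <= Rabs (f (theta I) - f (theta I))) by apply Rabs_pos.
  destruct (Rle_or_lt 0 L); auto. assert (0 < 2 + beta * Phi I a (theta I) + beta * Phi I a (theta I)) by nra. nra. Qed.

Lemma contract v f L : Lip f L -> Lip (Pf I p q v f) (abar * L).
Proof. intros HL x y Hx Hy. assert (HL0 := Lip_nonneg f L HL).
  destruct (lip_center f L HL) as [c Hc].
  set (g := fun z => f z - c). set (h := fun z => L * (1 + beta * Phi I a z)).
  assert (Hgh : forall z, valid I z -> - h z <= g z <= h z) by (intros z Hz; unfold g, h; apply Rabs_le_between, Hc; auto).
  assert (HPf : forall w, valid I w -> Pf I p q v f w = Pf I p q v g w + c).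
  { intros w Hw. unfold g. rewrite Pf_minus, Pf_const; auto. ring. }
  rewrite HPf, HPf by auto.
  assert (Hph : forall w, valid I w -> Pf I p q v h w <= L * (1 + beta * (gam * Phi I a w + bb))).
  { intros w Hw. unfold h. rewrite (Pf_ext _ _ _ _ _ (fun z => L * 1 + (L * beta) * Phi I a z)) by (intros; ring).
    rewrite Pf_plus, Pf_scal, Pf_scal, Pf_const by auto. assert (H := drift v w Hw).
    assert (H2 := beta_bounds). assert (0 <= L * beta) by nra. nra. }
  assert (Habs : forall w, valid I w -> Rabs (Pf I p q v g w) <= Pf I p q v h w).
  { intros w Hw. apply Rabs_le. split.
    - replace (- Pf I p q v h w) with (Pf I p q v (fun z => - h z) w) by (rewrite (Pf_ext _ _ _ _ _ (fun z => (-1) * h z)) by (intros; ring); rewrite Pf_scal; ring).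
      apply Pf_mono. intros; apply Hgh; auto.
    - apply Pf_mono. intros; apply Hgh; auto. }
  assert (Hab := abar_bounds). assert (Hbe := beta_bounds). assert (Hg := gam_bounds).
  assert (HPx := Phi_nonneg x). assert (HPy := Phi_nonneg y). assert (Hal := alpha_bounds). assert (HRp := Rr_pos).
  destruct (Rle_or_lt (Phi I a x) Rr) as [Hxs|Hxb]; [destruct (Rle_or_lt (Phi I a y) Rr) as [Hys|Hyb]|].
  -
    assert (Hsm : forall w, valid I w -> Phi I a w <= Rr ->
        Rabs (Pf I p q v g w - alpha * g (theta I)) <= L * (1 - alpha + beta * (gam * Phi I a w + bb))).
    { intros w Hw HwR. assert (Hht := Hgh (theta I) (theta_valid I)).
      assert (Hhth : L <= h (theta I)). { unfold h. assert (H0 := Phi_nonneg (theta I)).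
        assert (0 <= L * (beta * Phi I a (theta I))) by (apply Rmult_le_pos; [lra|apply Rmult_le_pos; lra]). nra. }
      assert (Hm1 := minor v w (fun z => h z - g z) Hw HwR ltac:(intros z Hz; assert (H0 := Hgh z Hz); lra)).
      assert (Hm2 := minor v w (fun z => h z + g z) Hw HwR ltac:(intros z Hz; assert (H0 := Hgh z Hz); lra)).
      rewrite Pf_minus in Hm1. rewrite Pf_plus in Hm2. assert (H1 := Hph w Hw).
      apply Rabs_le. split; nra. }
    assert (H1 := Hsm x Hx Hxs). assert (H2 := Hsm y Hy Hys).
    replace (Pf I p q v g x + c - (Pf I p q v g y + c)) with
      ((Pf I p q v g x - alpha * g (theta I)) - (Pf I p q v g y - alpha * g (theta I))) by ring.
    eapply Rle_trans; [apply Rabs_sub_le|].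
    assert (Hsx : (abar - gam) * (beta * Phi I a x) >= 0) by (apply Rle_ge, Rmult_le_pos; [lra|apply Rmult_le_pos; lra]).
    assert (Hsy : (abar - gam) * (beta * Phi I a y) >= 0) by (apply Rle_ge, Rmult_le_pos; [lra|apply Rmult_le_pos; lra]).
    assert (abar * (2 + beta * Phi I a x + beta * Phi I a y) >= 2 - alpha + gam * beta * (Phi I a x + Phi I a y)) by lra.
    nra.
  - assert (HS : Rr <= Phi I a x + Phi I a y) by lra.
    assert (H1 := Habs x Hx). assert (H2 := Habs y Hy). assert (H3 := Hph x Hx). assert (H4 := Hph y Hy).
    replace (Pf I p q v g x + c - (Pf I p q v g y + c)) with (Pf I p q v g x - Pf I p q v g y) by ring.
    eapply Rle_trans; [apply Rabs_sub_le|].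
    assert (HR : Rr * (1 - gam) = 4 * (1 + bb)) by (unfold Rr; field; lra).
    assert (Hs1 : (abar - gam) * (beta * (Phi I a x + Phi I a y)) >= (1 - gam) / 2 * (beta * Rr)).
    { apply Rle_ge, Rmult_le_compat; try lra. apply Rmult_le_pos; lra. apply Rmult_le_compat_l; lra. }
    assert (Hs2 : (1 - gam) / 2 * (beta * Rr) = 2 * beta * (1 + bb)) by (unfold Rr; field; lra).
    assert (abar * (2 + beta * Phi I a x + beta * Phi I a y) >= 2 + 2 * beta * bb + beta * gam * (Phi I a x + Phi I a y)) by lra.
    nra.
  - assert (HS : Rr <= Phi I a x + Phi I a y) by lra.
    assert (H1 := Habs x Hx). assert (H2 := Habs y Hy). assert (H3 := Hph x Hx). assert (H4 := Hph y Hy).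
    replace (Pf I p q v g x + c - (Pf I p q v g y + c)) with (Pf I p q v g x - Pf I p q v g y) by ring.
    eapply Rle_trans; [apply Rabs_sub_le|].
    assert (HR : Rr * (1 - gam) = 4 * (1 + bb)) by (unfold Rr; field; lra).
    assert (Hs1 : (abar - gam) * (beta * (Phi I a x + Phi I a y)) >= (1 - gam) / 2 * (beta * Rr)).
    { apply Rle_ge, Rmult_le_compat; try lra. apply Rmult_le_pos; lra. apply Rmult_le_compat_l; lra. }
    assert (Hs2 : (1 - gam) / 2 * (beta * Rr) = 2 * beta * (1 + bb)) by (unfold Rr; field; lra).
    assert (abar * (2 + beta * Phi I a x + beta * Phi I a y) >= 2 + 2 * beta * bb + beta * gam * (Phi I a x + Phi I a y)) by lra.
    nra. Qed.

Lemma lip_iter v f L t : Lip f L -> Lip (expect I p q v t f) (abar ^ t * L).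
Proof. intros H. induction t. simpl. rewrite Rmult_1_l; auto.
  simpl expect. rewrite <- tech_pow_Rmult, Rmult_assoc. apply contract; auto. Qed.

Lemma lip_of_bound f c : 0 <= c -> (forall z, valid I z -> Rabs (f z) <= c * Phi I a z) -> Lip f (c / beta).
Proof. intros Hc H x y Hx Hy. assert (Hb := beta_bounds).
  eapply Rle_trans; [apply Rabs_sub_le|]. assert (H1 := H x Hx). assert (H2 := H y Hy).
  replace (c / beta * (2 + beta * Phi I a x + beta * Phi I a y)) with (2 * (c / beta) + c * Phi I a x + c * Phi I a y) by (field; lra).
  assert (0 <= c / beta) by (unfold Rdiv; apply Rmult_le_pos; [lra|apply Rlt_le, Rinv_0_lt_compat; lra]). lra. Qed.

Lemma bs_eq g N : boxsum I g N = gsum (box N I) g.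
Proof. reflexivity. Qed.

Lemma bs_split g N M : (N <= M)%nat ->
  boxsum I g M = boxsum I g N + boxsum I (fun z => if inb N z then 0 else g z) M.
Proof. intros HNM. rewrite !bs_eq.
  rewrite (gsum_ext_in (box M I) g (fun z => (if inb N z then g z else 0) + (if inb N z then 0 else g z)))
    by (intros; destruct (inb N x); ring).
  rewrite gsum_plus. f_equal. rewrite (box_restrict I _ N M HNM).
  apply gsum_ext_in. intros z Hz. apply box_in in Hz. destruct Hz as [_ Hz]. rewrite Hz; auto.
  intros z _ Hz. rewrite Hz; auto. Qed.

Lemma bs_le g h N : (forall z, valid I z -> g z <= h z) -> boxsum I g N <= boxsum I h N.
Proof. intros H. rewrite !bs_eq. apply gsum_le_in. intros z Hz. apply box_in in Hz. apply H, Hz. Qed.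

Lemma bs_nonneg g N : (forall z, valid I z -> 0 <= g z) -> 0 <= boxsum I g N.
Proof. intros H. rewrite bs_eq. apply gsum_nonneg. intros z Hz. apply box_in in Hz. apply H, Hz. Qed.

Lemma bs_mono g N M : (forall z, valid I z -> 0 <= g z) -> (N <= M)%nat -> boxsum I g N <= boxsum I g M.
Proof. intros H HNM. rewrite (bs_split g N M HNM). assert (0 <= boxsum I (fun z => if inb N z then 0 else g z) M).
  apply bs_nonneg. intros z Hz; destruct (inb N z); [lra|auto]. lra. Qed.

Lemma bs_abs g N : Rabs (boxsum I g N) <= boxsum I (fun z => Rabs (g z)) N.
Proof. rewrite !bs_eq. apply gsum_abs. Qed.

Lemma bs_plus g h N : boxsum I (fun z => g z + h z) N = boxsum I g N + boxsum I h N.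
Proof. rewrite !bs_eq. apply gsum_plus. Qed.
Lemma bs_minus g h N : boxsum I (fun z => g z - h z) N = boxsum I g N - boxsum I h N.
Proof. rewrite !bs_eq. apply gsum_minus. Qed.
Lemma bs_scal c g N : boxsum I (fun z => c * g z) N = c * boxsum I g N.
Proof. rewrite !bs_eq. apply gsum_scal. Qed.
Lemma bs_ext g h N : (forall z, valid I z -> g z = h z) -> boxsum I g N = boxsum I h N.
Proof. intros H. rewrite !bs_eq. apply gsum_ext_in. intros z Hz. apply box_in in Hz. apply H, Hz. Qed.

Lemma bs_restrict g N M : (N <= M)%nat -> boxsum I (fun z => if inb N z then g z else 0) M = boxsum I g N.
Proof. intros HNM. rewrite !bs_eq. rewrite (box_restrict I _ N M HNM).
  apply gsum_ext_in. intros z Hz. apply box_in in Hz. destruct Hz as [_ Hz]. rewrite Hz; auto.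
  intros z _ Hz. rewrite Hz; auto. Qed.

Lemma bs_tail g w N M : (N <= M)%nat -> (forall z, valid I z -> Rabs (g z) <= w z) ->
  Rabs (boxsum I g M - boxsum I g N) <= boxsum I w M - boxsum I w N.
Proof. intros HNM H. rewrite (bs_split g N M HNM), (bs_split w N M HNM).
  replace (boxsum I g N + boxsum I (fun z => if inb N z then 0 else g z) M - boxsum I g N)
    with (boxsum I (fun z => if inb N z then 0 else g z) M) by ring.
  eapply Rle_trans; [apply bs_abs|]. replace (boxsum I w N + boxsum I (fun z => if inb N z then 0 else w z) M - boxsum I w N)
    with (boxsum I (fun z => if inb N z then 0 else w z) M) by ring.
  apply bs_le. intros z Hz. destruct (inb N z). rewrite Rabs_R0; lra. auto. Qed.

Lemma bs_conv_dom g w lw : (forall z, valid I z -> Rabs (g z) <= w z) -> Un_cv (boxsum I w) lw ->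
  exists s, Un_cv (boxsum I g) s.
Proof. intros H Hw. assert (Hc : Cauchy_crit (boxsum I g)).
  { intros e He. destruct (CV_Cauchy (boxsum I w) (exist _ lw Hw) e He) as [N HN]. exists N.
    intros n m Hn Hm. unfold Rdist in *. destruct (Nat.le_ge_cases n m).
    - assert (H1 := bs_tail g w n m H0 H). assert (H2 := HN m n Hm Hn). eapply Rle_lt_trans; [|apply H2].
      rewrite Rabs_minus_sym. eapply Rle_trans; [apply H1|]. apply Rle_abs.
    - assert (H1 := bs_tail g w m n H0 H). assert (H2 := HN n m Hn Hm). eapply Rle_lt_trans; [|apply H2].
      eapply Rle_trans; [apply H1|]. apply Rle_abs. }
  destruct (R_complete _ Hc) as [s Hs]. exists s; auto. Qed.

Lemma bs_conv_bounded w B : (forall z, valid I z -> 0 <= w z) -> (forall N, boxsum I w N <= B) ->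
  exists l, Un_cv (boxsum I w) l /\ l <= B.
Proof. intros H HB. assert (Hg : Un_growing (boxsum I w)) by (intros n; apply bs_mono; auto).
  destruct (growing_cv _ Hg) as [l Hl]. exists B; intros x [n ->]; auto.
  exists l. split; auto. apply (lim_le _ _ _ 0 Hl). intros; auto. Qed.

Section Stat.
Variable v : state -> nat.
Variable pi : state -> R.
Hypothesis Hpi : stationary I p q v pi.

Lemma pi_nonneg z : valid I z -> 0 <= pi z.
Proof. apply Hpi. Qed.

Lemma pi_cv1 : Un_cv (boxsum I pi) 1.
Proof. apply Hpi. Qed.

Lemma pi_le1 N : boxsum I pi N <= 1.
Proof. apply growing_ineq. intros n; apply bs_mono; [apply pi_nonneg|lia]. apply pi_cv1. Qed.

Lemma rho_le y N : valid I y -> boxsum I (fun x => pi x * trans I p q v x y) N <= pi y.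
Proof. intros Hy. destruct Hpi as [_ [_ H3]]. destruct (H3 y Hy) as [_ Hc].
  apply growing_ineq; auto. intros n; apply bs_mono; [|lia]. intros z Hz. apply Rmult_le_pos.
  apply pi_nonneg; auto. apply trans_nonneg. Qed.

Lemma Pf_boxN g x N : inb N x = true -> Pf I p q v g x = gsum (box (S N) I) (fun z => trans I p q v x z * g z).
Proof. intros H. apply Pf_box. assert (H2 := max_le_inb N x H). lia. Qed.

Lemma inv_step h H : (forall z, valid I z -> Rabs (h z) <= H) -> forall N,
  Rabs (boxsum I (fun x => pi x * Pf I p q v h x) N - boxsum I (fun z => pi z * h z) (S N)) <=
  H * (boxsum I pi (S N) - boxsum I pi N).
Proof. intros Hh N.
  assert (E1 : boxsum I (fun x => pi x * Pf I p q v h x) N =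
     gsum (box (S N) I) (fun z => h z * boxsum I (fun x => pi x * trans I p q v x z) N)).
  { rewrite bs_eq. transitivity (gsum (box N I) (fun x => gsum (box (S N) I) (fun z => pi x * trans I p q v x z * h z))).
    - apply gsum_ext_in. intros x Hx. apply box_in in Hx. rewrite (Pf_boxN _ _ N) by apply Hx.
      rewrite <- gsum_scal. apply gsum_ext_in. intros; ring.
    - rewrite gsum_swap. apply gsum_ext_in. intros z _. rewrite bs_eq, <- gsum_scal. apply gsum_ext_in. intros; ring. }
  assert (E2 : boxsum I pi N = gsum (box (S N) I) (fun z => boxsum I (fun x => pi x * trans I p q v x z) N)).
  { rewrite !bs_eq. transitivity (gsum (box N I) (fun x => gsum (box (S N) I) (fun z => pi x * trans I p q v x z))).
    - apply gsum_ext_in. intros x Hx. apply box_in in Hx. rewrite gsum_scal.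
      transitivity (pi x * Pf I p q v (fun _ => 1) x). rewrite Pf_one; [ring|apply Hx].
      f_equal. rewrite (Pf_boxN _ _ N) by apply Hx. apply gsum_ext_in; intros; ring.
    - rewrite gsum_swap. reflexivity. }
  rewrite E1, E2, bs_eq, (bs_eq pi (S N)). rewrite <- gsum_minus.
  rewrite <- (gsum_minus (box (S N) I) pi). rewrite <- gsum_scal.
  eapply Rle_trans; [apply gsum_abs|]. apply gsum_le_in. intros z Hz. apply box_in in Hz. destruct Hz as [Hz _].
  assert (Hr := rho_le z N Hz). assert (Hr0 : 0 <= boxsum I (fun x => pi x * trans I p q v x z) N).
  { apply bs_nonneg. intros; apply Rmult_le_pos; [apply pi_nonneg; auto|apply trans_nonneg]. }
  replace (h z * boxsum I (fun x => pi x * trans I p q v x z) N - pi z * h z) with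
    (h z * (boxsum I (fun x => pi x * trans I p q v x z) N - pi z)) by ring.
  rewrite Rabs_mult. replace (H * (pi z - boxsum I (fun x => pi x * trans I p q v x z) N)) with
    (H * Rabs (boxsum I (fun x => pi x * trans I p q v x z) N - pi z)).
  apply Rmult_le_compat_r. apply Rabs_pos. apply Hh; auto.
  rewrite Rabs_minus_sym, Rabs_right by lra. ring. Qed.

Lemma inv_bounded h H s : (forall z, valid I z -> Rabs (h z) <= H) ->
  Un_cv (boxsum I (fun z => pi z * h z)) s -> Un_cv (boxsum I (fun z => pi z * Pf I p q v h z)) s.
Proof. intros Hh Hs. apply (cv_near _ (fun N => boxsum I (fun z => pi z * h z) (S N)) (fun N => H * (boxsum I pi (S N) - boxsum I pi N))).
  - apply cv_shift; auto.
  - replace 0 with (H * (1 - 1)) by ring. apply cv_scal. apply CV_minus. apply cv_shift, pi_cv1. apply pi_cv1.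
  - intros N. apply inv_step; auto. Qed.

Lemma expect_bounded t h H x : valid I x -> (forall z, valid I z -> Rabs (h z) <= H) -> Rabs (expect I p q v t h x) <= H.
Proof. intros Hx Hh. eapply Rle_trans. apply expect_abs; auto.
  rewrite <- (expect_const v t H x Hx). apply expect_mono; auto. Qed.

Lemma inv_iter h H s t : (forall z, valid I z -> Rabs (h z) <= H) ->
  Un_cv (boxsum I (fun z => pi z * h z)) s -> Un_cv (boxsum I (fun z => pi z * expect I p q v t h z)) s.
Proof. intros Hh Hs. induction t; auto. simpl expect. apply (inv_bounded _ H); auto.
  intros; apply expect_bounded; auto. Qed.

End Stat.

Definition BB := bb / (1 - gam).

Lemma BB_pos : 0 < BB.
Proof. unfold BB. assert (H := bb_ge1). assert (H2 := gam_bounds). apply Rmult_lt_0_compat; [lra|apply Rinv_0_lt_compat; lra]. Qed.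

Lemma drift_iter v t x : valid I x -> expect I p q v t (Phi I a) x <= gam ^ t * Phi I a x + BB.
Proof. revert x. induction t; intros x Hx.
  - simpl. assert (H := BB_pos). lra.
  - rewrite expect_S.
    assert (H1 : expect I p q v t (Pf I p q v (Phi I a)) x <= expect I p q v t (fun z => gam * Phi I a z + bb * (fun _ => 1) z) x).
    { apply expect_mono; auto. intros; cbv beta; rewrite Rmult_1_r; apply drift; auto. }
    eapply Rle_trans; [apply H1|].
    rewrite expect_plus, expect_scal, expect_scal, expect_const by auto.
    assert (H := IHt x Hx). assert (Hg := gam_bounds). simpl.
    assert (E : BB = gam * BB + bb) by (unfold BB; field; lra). nra. Qed.

Lemma out_le_Phi z N : valid I z -> inb N z = false -> 1 <= exp (- a) ^ (S N) * Phi I a z.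
Proof. intros Hz Hb. destruct (inb_false_exists N z Hb) as [i [Hi1 Hi2]]. rewrite Hz in Hi1.
  eapply Rle_trans with (exp (- a) ^ (S N) * exp (a * INR (nth i z 0%nat))).
  - rewrite exp_pow_INR, <- exp_plus. rewrite <- exp_0. apply exp_le.
    assert (INR (S N) <= INR (nth i z 0%nat)) by (apply le_INR; lia). nra.
  - apply Rmult_le_compat_l. apply pow_le, Rlt_le, exp_pos. apply Phi_ge_term; auto. Qed.

Lemma piPhi_bound v pi (Hpi : stationary I p q v pi) N : boxsum I (fun z => pi z * Phi I a z) N <= BB.
Proof.
  set (hN := fun z => if inb N z then Phi I a z else 0).
  set (HN := INR I * exp (a * INR N)).
  assert (HN0 : 0 <= HN) by (unfold HN; apply Rmult_le_pos; [apply pos_INR|apply Rlt_le, exp_pos]).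
  assert (Hh : forall z, valid I z -> Rabs (hN z) <= HN).
  { intros z Hz. unfold hN. destruct (inb N z) eqn:E. rewrite Rabs_right by (apply Rle_ge, Phi_nonneg). apply Phi_box; auto.
    rewrite Rabs_R0; auto. }
  assert (Hcv : Un_cv (boxsum I (fun z => pi z * hN z)) (boxsum I (fun z => pi z * Phi I a z) N)).
  { apply (cv_eventually _ _ N). intros M HM. rewrite <- (bs_restrict _ N M HM). apply bs_ext. intros z _.
    unfold hN. destruct (inb N z); ring. }
  apply Rle_plus_epsilon. intros e He.
  destruct (pi_cv1 v pi Hpi (e / (2 * (HN + 1))) ltac:(apply Rdiv_lt_0_compat; lra)) as [M0 HM0].
  assert (HM0' := HM0 M0 (le_n _)). unfold Rdist in HM0'. apply Rabs_def2 in HM0'.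
  assert (Hs1 := pi_le1 v pi Hpi M0).
  assert (Htail : HN * (1 - boxsum I pi M0) <= e / 2).
  { assert (HN * (1 - boxsum I pi M0) <= HN * (e / (2 * (HN + 1)))) by (apply Rmult_le_compat_l; lra).
    assert (HN * (e / (2 * (HN + 1))) <= e / 2). { unfold Rdiv. rewrite Rinv_mult. 
      replace (HN * (e * (/ 2 * / (HN + 1)))) with ((e / 2) * (HN / (HN + 1))) by (field; lra).
      assert (HN / (HN + 1) <= 1) by (apply (Rmult_le_reg_r (HN + 1)); [lra|]; field_simplify; lra).
      assert (0 <= HN / (HN + 1)) by (apply Rmult_le_pos; [lra|apply Rlt_le, Rinv_0_lt_compat; lra]). nra. }
    lra. }
  set (C := boxsum I (fun z => pi z * Phi I a z) M0).
  assert (HC : 0 <= C) by (apply bs_nonneg; intros; apply Rmult_le_pos; [apply pi_nonneg with v; auto|apply Phi_nonneg]).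
  assert (Hg := gam_bounds).
  destruct (geom_small gam C (e / 2) ltac:(lra) ltac:(lra)) as [t Ht].
  assert (Hcvt := inv_iter v pi Hpi hN HN _ t Hh Hcv).
  apply (lim_le _ _ _ M0 Hcvt). intros M HM.
  rewrite (bs_split _ M0 M HM).
  assert (A1 : boxsum I (fun z => pi z * expect I p q v t hN z) M0 <= gam ^ t * C + BB).
  { apply Rle_trans with (boxsum I (fun z => pi z * (gam ^ t * Phi I a z + BB)) M0).
    - apply bs_le. intros z Hz. apply Rmult_le_compat_l. apply pi_nonneg with v; auto.
      eapply Rle_trans; [|apply drift_iter; auto]. apply expect_mono; auto. intros w Hw. unfold hN.
      destruct (inb N w); [lra|apply Phi_nonneg].
    - rewrite (bs_ext _ (fun z => gam ^ t * (pi z * Phi I a z) + BB * pi z)) by (intros; ring).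
      rewrite bs_plus, !bs_scal. fold C. assert (H0 := BB_pos).
      assert (BB * boxsum I pi M0 <= BB * 1) by (apply Rmult_le_compat_l; lra). lra. }
  assert (A2 : boxsum I (fun z => if inb M0 z then 0 else pi z * expect I p q v t hN z) M <= HN * (1 - boxsum I pi M0)).
  { apply Rle_trans with (boxsum I (fun z => HN * (if inb M0 z then 0 else pi z)) M).
    - apply bs_le. intros z Hz. destruct (inb M0 z). lra.
      assert (H1 := expect_bounded v t hN HN z Hz Hh). apply Rabs_le_b in H1.
      assert (H2 := pi_nonneg v pi Hpi z Hz). nra.
    - rewrite bs_scal. apply Rmult_le_compat_l; auto.
      assert (H1 := pi_le1 v pi Hpi M). rewrite (bs_split pi M0 M HM) in H1. lra. }
  lra. Qed.

Lemma piPhi_cv v pi (Hpi : stationary I p q v pi) : exists l, Un_cv (boxsum I (fun z => pi z * Phi I a z)) l /\ l <= BB.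
Proof. apply bs_conv_bounded. intros; apply Rmult_le_pos; [apply pi_nonneg with v; auto|apply Phi_nonneg].
  apply piPhi_bound with v; auto. Qed.

Definition Kc (c : R) := c * (2 / beta + BB + 1) + 1.

Lemma core v pi (Hpi : stationary I p q v pi) c f : 0 <= c -> (forall z, valid I z -> Rabs (f z) <= c * Phi I a z) ->
  exists s, has_sum I (fun z => pi z * f z) s /\
    forall x, valid I x -> forall t, Rabs (expect I p q v t f x - s) <= Kc c * (1 + Phi I a x) * abar ^ t.
Proof. intros Hc Hf.
  assert (Hpn := pi_nonneg v pi Hpi).
  destruct (piPhi_cv v pi Hpi) as [l [Hl HlB]].
  assert (Hdom : forall z, valid I z -> Rabs (pi z * f z) <= c * (pi z * Phi I a z)).
  { intros z Hz. rewrite Rabs_mult, Rabs_right by (apply Rle_ge; auto). assert (H := Hf z Hz). assert (H2 := Hpn z Hz). nra. }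
  destruct (bs_conv_dom (fun z => pi z * f z) (fun z => c * (pi z * Phi I a z)) (c * l) Hdom) as [s Hs].
  { apply (cv_ext_ev (fun N => c * boxsum I (fun z => pi z * Phi I a z) N) _ _ 0). intros; rewrite bs_scal; auto.
    apply cv_scal; auto. }
  exists s. split.
  { split; auto. exists (c * BB). intros n. eapply Rle_trans. apply bs_le. apply Hdom.
    rewrite bs_scal. apply Rmult_le_compat_l; auto. apply piPhi_bound with v; auto. }
  intros x Hx t.
  assert (Hb := beta_bounds). assert (Hab := abar_bounds). assert (HBB := BB_pos). assert (HPx := Phi_nonneg x).
  set (Lt := abar ^ t * (c / beta)).
  assert (HLt : 0 <= Lt) by (unfold Lt; apply Rmult_le_pos; [apply pow_le; lra|unfold Rdiv; apply Rmult_le_pos; [lra|apply Rlt_le, Rinv_0_lt_compat; lra]]).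
  apply Rle_trans with (Lt * (2 + beta * Phi I a x + beta * BB)).
  2:{ unfold Lt, Kc. replace (abar ^ t * (c / beta) * (2 + beta * Phi I a x + beta * BB)) with
        (abar ^ t * (c * (2 / beta + BB) + c * Phi I a x)) by (field; lra).
      rewrite (Rmult_comm _ (abar ^ t)). apply Rmult_le_compat_l. apply pow_le; lra.
      assert (0 <= c * (2 / beta + BB)) by (apply Rmult_le_pos; [lra|]; assert (0 <= 2 / beta) by (unfold Rdiv; apply Rmult_le_pos; [lra|apply Rlt_le, Rinv_0_lt_compat; lra]); lra).
      assert (0 <= c * Phi I a x) by nra. nra. }
  apply Rle_plus_epsilon. intros e He.
  destruct (Hs e He) as [N1 HN1].
  set (N := max N1 (list_max x + t)).
  assert (HsN := HN1 N ltac:(unfold N; lia)). unfold Rdist in HsN.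
  set (fN := fun z => if inb N z then f z else 0).
  assert (Ea : expect I p q v t f x = expect I p q v t fN x).
  { apply expect_local; auto. intros z Hz Hb'. unfold fN. rewrite (inb_mono (list_max x + t) N z); auto. unfold N; lia. }
  set (HN := c * (INR I * exp (a * INR N))).
  assert (HfN : forall z, valid I z -> Rabs (fN z) <= HN).
  { intros z Hz. unfold fN, HN. destruct (inb N z) eqn:E. eapply Rle_trans. apply Hf; auto.
    apply Rmult_le_compat_l; auto. apply Phi_box; auto. rewrite Rabs_R0. apply Rmult_le_pos; auto.
    apply Rmult_le_pos; [apply pos_INR|apply Rlt_le, exp_pos]. }
  assert (HfN2 : forall z, valid I z -> Rabs (fN z) <= c * Phi I a z).
  { intros z Hz. unfold fN. destruct (inb N z). apply Hf; auto. rewrite Rabs_R0. apply Rmult_le_pos; auto; apply Phi_nonneg. }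
  assert (HcvN : Un_cv (boxsum I (fun z => pi z * fN z)) (boxsum I (fun z => pi z * f z) N)).
  { apply (cv_eventually _ _ N). intros M HM. rewrite <- (bs_restrict _ N M HM). apply bs_ext. intros z _.
    unfold fN. destruct (inb N z); ring. }
  set (eN := expect I p q v t fN).
  assert (Hcve := inv_iter v pi Hpi fN HN _ t HfN HcvN). fold eN in Hcve.
  assert (Hlip := lip_iter v fN (c / beta) t (lip_of_bound fN c Hc HfN2)). fold eN in Hlip.
  assert (Hu : Un_cv (fun M => eN x * boxsum I pi M - boxsum I (fun z => pi z * eN z) M)
                     (eN x * 1 - boxsum I (fun z => pi z * f z) N)).
  { apply CV_minus; auto. apply cv_scal. apply pi_cv1 with v; auto. }
  assert (Hbd : Rabs (eN x * 1 - boxsum I (fun z => pi z * f z) N) <= Lt * (2 + beta * Phi I a x + beta * BB)).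
  { apply (lim_abs_le _ _ _ 0 Hu). intros M _.
    rewrite <- bs_scal, <- bs_minus. eapply Rle_trans. apply bs_abs.
    apply Rle_trans with (boxsum I (fun z => Lt * ((2 + beta * Phi I a x) * pi z + beta * (pi z * Phi I a z))) M).
    - apply bs_le. intros z Hz. replace (eN x * pi z - pi z * eN z) with (pi z * (eN x - eN z)) by ring.
      rewrite Rabs_mult, Rabs_right by (apply Rle_ge; auto). assert (H1 := Hlip x z Hx Hz). unfold Lt.
      assert (H2 := Hpn z Hz). replace (abar ^ t * (c / beta) * ((2 + beta * Phi I a x) * pi z + beta * (pi z * Phi I a z)))
        with (pi z * (abar ^ t * (c / beta) * (2 + beta * Phi I a x + beta * Phi I a z))) by ring.
      apply Rmult_le_compat_l; auto.
    - rewrite bs_scal, bs_plus, !bs_scal. apply Rmult_le_compat_l; auto.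
      assert (H1 := pi_le1 v pi Hpi M). assert (H2 := piPhi_bound v pi Hpi M).
      assert (0 <= 2 + beta * Phi I a x) by nra. nra. }
  rewrite Ea. fold eN.
  replace (eN x - s) with ((eN x * 1 - boxsum I (fun z => pi z * f z) N) + (boxsum I (fun z => pi z * f z) N - s)) by ring.
  eapply Rle_trans. apply Rabs_triang. lra. Qed.

Definition Dc := (1 / beta) * (2 + 2 * beta * INR I + beta * BB).

Lemma indic_bound y z : valid I z -> Rabs (indic y z) <= 1 * Phi I a z.
Proof. intros Hz. assert (H := Phi_ge1 z). unfold indic. destruct (list_eq_dec Nat.eq_dec z y).
  rewrite Rabs_R1; lra. rewrite Rabs_R0; lra. Qed.

Lemma expect_nonneg v t g x : valid I x -> (forall z, valid I z -> 0 <= g z) -> 0 <= expect I p q v t g x.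
Proof. intros Hx H. rewrite <- (expect_const v t 0 x Hx). apply expect_mono; auto. Qed.

Lemma Pn_nonneg v t x y : valid I x -> 0 <= Pn I p q v t x y.
Proof. intros Hx. unfold Pn. apply expect_nonneg; auto. intros; unfold indic; destruct (list_eq_dec Nat.eq_dec z y); lra. Qed.

Lemma mu_cauchy v y t s : Rabs (Pn I p q v (s + t) (theta I) y - Pn I p q v t (theta I) y) <= Dc * abar ^ t.
Proof. unfold Pn. rewrite expect_comp. set (e := expect I p q v t (indic y)).
  assert (Hlip := lip_iter v (indic y) (1 / beta) t (lip_of_bound (indic y) 1 ltac:(lra) (indic_bound y))).
  fold e in Hlip. assert (Hth := theta_valid I).
  assert (Hb := beta_bounds). assert (Hab := abar_bounds). assert (HBB := BB_pos).
  set (Lt := abar ^ t * (1 / beta)).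
  assert (HLt : 0 <= Lt) by (unfold Lt; apply Rmult_le_pos; [apply pow_le; lra|unfold Rdiv; rewrite Rmult_1_l; apply Rlt_le, Rinv_0_lt_compat; lra]).
  replace (expect I p q v s e (theta I) - e (theta I)) with (expect I p q v s (fun z => e z - e (theta I)) (theta I))
    by (rewrite expect_minus, expect_const; auto).
  eapply Rle_trans. apply expect_abs; auto.
  eapply Rle_trans. apply (expect_mono v s _ (fun z => Lt * (2 + beta * INR I) * 1 + (Lt * beta) * Phi I a z)); auto.
  { intros z Hz. rewrite Rabs_minus_sym. assert (H := Hlip (theta I) z Hth Hz). rewrite Phi_theta in H. fold Lt in H. lra. }
  rewrite expect_plus, expect_scal, expect_scal, expect_const by auto.
  assert (H := drift_iter v s (theta I) Hth). rewrite Phi_theta in H.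
  assert (Hg := gam_bounds). assert (gam ^ s <= 1) by (apply Rle_trans with (1 ^ s); [apply pow_incr; lra|rewrite pow1; lra]).
  assert (HI0 : 0 <= INR I) by apply pos_INR.
  assert (gam ^ s * INR I <= INR I) by (assert (0 <= gam ^ s) by (apply pow_le; lra); nra).
  assert (0 <= Lt * beta) by nra.
  apply Rle_trans with (Lt * (2 + beta * INR I) * 1 + Lt * beta * (INR I + BB)).
  apply Rplus_le_compat_l. apply Rmult_le_compat_l; auto. lra.
  unfold Dc, Lt. right. field. lra. Qed.

Lemma mu_cauchy_crit v y : Cauchy_crit (fun t => Pn I p q v t (theta I) y).
Proof. intros e He. assert (Hab := abar_bounds).
  destruct (geom_small abar Dc e ltac:(lra) He) as [N HN]. exists N. intros n m Hn Hm. unfold Rdist.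
  assert (HD : 0 <= Dc). { unfold Dc. assert (Hb := beta_bounds). assert (H := BB_pos). assert (0 <= INR I) by apply pos_INR.
    apply Rmult_le_pos. unfold Rdiv; rewrite Rmult_1_l; apply Rlt_le, Rinv_0_lt_compat; lra. nra. }
  destruct (Nat.le_ge_cases n m).
  - replace m with ((m - n) + n)%nat by lia. rewrite Rabs_minus_sym. eapply Rle_lt_trans. apply mu_cauchy.
    eapply Rle_lt_trans; [|apply HN]. rewrite (Rmult_comm (abar ^ N)). apply Rmult_le_compat_l; auto. apply pow_decr; [lra|lia].
  - replace n with ((n - m) + m)%nat by lia. eapply Rle_lt_trans. apply mu_cauchy.
    eapply Rle_lt_trans; [|apply HN]. rewrite (Rmult_comm (abar ^ N)). apply Rmult_le_compat_l; auto. apply pow_decr; [lra|lia]. Qed.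

Definition piv v y : R := proj1_sig (R_complete _ (mu_cauchy_crit v y)).

Lemma piv_cv v y : Un_cv (fun t => Pn I p q v t (theta I) y) (piv v y).
Proof. unfold piv. destruct (R_complete _ (mu_cauchy_crit v y)); auto. Qed.

Definition tl (N : nat) := exp (- a) ^ (S N) * (INR I + BB).

Lemma tl_cv : Un_cv tl 0.
Proof. apply (cv_ext_ev (fun N => exp (- a) ^ N * (exp (- a) * (INR I + BB))) _ _ 0).
  intros; unfold tl; simpl; ring. apply cv_geom. assert (H := expna). lra. Qed.

Lemma tail_mass v t N : 0 <= expect I p q v t (fun z => if inb N z then 0 else 1) (theta I) <= tl N.
Proof. assert (Hth := theta_valid I). split.
  - apply expect_nonneg; auto. intros z _; destruct (inb N z); lra.
  - eapply Rle_trans. apply (expect_mono v t _ (fun z => exp (- a) ^ (S N) * Phi I a z)); auto.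
    intros z Hz. destruct (inb N z) eqn:E. apply Rmult_le_pos. apply pow_le, Rlt_le, exp_pos. apply Phi_nonneg.
    apply out_le_Phi; auto.
    rewrite expect_scal. unfold tl. apply Rmult_le_compat_l. apply pow_le, Rlt_le, exp_pos.
    eapply Rle_trans. apply drift_iter; auto. rewrite Phi_theta.
    assert (Hg := gam_bounds). assert (gam ^ t <= 1) by (apply Rle_trans with (1 ^ t); [apply pow_incr; lra|rewrite pow1; lra]).
    assert (0 <= INR I) by apply pos_INR. assert (0 <= gam ^ t) by (apply pow_le; lra). nra. Qed.

Lemma gsum_mu v t N : gsum (box N I) (fun y => Pn I p q v t (theta I) y) =
  1 - expect I p q v t (fun z => if inb N z then 0 else 1) (theta I).
Proof. unfold Pn. rewrite <- (expect_gsum v t (box N I) (fun y z => indic y z)).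
  rewrite <- (expect_const v t 1 (theta I) (theta_valid I)) at 1. rewrite <- expect_minus.
  apply expect_ext; [|apply theta_valid]. intros z Hz.
  rewrite (gsum_ext_in _ _ (fun y => 1 * indic y z)) by (intros; ring).
  rewrite box_single by apply Hz. destruct (inb N z); ring. Qed.

Lemma piv_nonneg v y : 0 <= piv v y.
Proof. apply (lim_ge _ _ _ 0 (piv_cv v y)). intros; apply Pn_nonneg, theta_valid. Qed.

Lemma bs_piv_cv v N : Un_cv (fun t => gsum (box N I) (fun y => Pn I p q v t (theta I) y)) (boxsum I (piv v) N).
Proof. rewrite bs_eq. apply cv_gsum. intros; apply piv_cv. Qed.

Lemma bs_piv_bounds v N : 1 - tl N <= boxsum I (piv v) N <= 1.
Proof. split.
  - apply (lim_ge _ _ _ 0 (bs_piv_cv v N)). intros t _. rewrite gsum_mu. assert (H := tail_mass v t N). lra.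
  - apply (lim_le _ _ _ 0 (bs_piv_cv v N)). intros t _. rewrite gsum_mu. assert (H := tail_mass v t N). lra. Qed.

Lemma piv_stationary v : stationary I p q v (piv v).
Proof. split; [intros; apply piv_nonneg|split].
  - split. exists 1. intros n. rewrite (bs_ext _ (piv v)). apply bs_piv_bounds.
    intros z _. apply Rabs_right, Rle_ge, piv_nonneg.
    apply (cv_near _ (fun _ => 1) tl). apply cv_const. apply tl_cv.
    intros N. assert (H := bs_piv_bounds v N). assert (H2 := tl_cv).
    assert (0 <= tl N) by (unfold tl; apply Rmult_le_pos; [apply pow_le, Rlt_le, exp_pos|assert (H3 := BB_pos); assert (0 <= INR I) by apply pos_INR; lra]).
    rewrite Rabs_left1 by lra. lra.
  - intros y Hy. split.
    + exists 1. intros n. eapply Rle_trans; [|apply (proj2 (bs_piv_bounds v n))]. apply bs_le. intros z Hz.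
      rewrite Rabs_mult, Rabs_right by (apply Rle_ge, piv_nonneg). rewrite Rabs_right by (apply Rle_ge, trans_nonneg).
      assert (H := trans_le1 v z y Hz Hy). assert (H2 := piv_nonneg v z). nra.
    + apply (cv_near _ (fun _ => piv v y) tl). apply cv_const. apply tl_cv.
      intros N.
      assert (Hcv : Un_cv (fun t => gsum (box N I) (fun x => Pn I p q v t (theta I) x * trans I p q v x y) - Pn I p q v (S t) (theta I) y)
                    (boxsum I (fun x => piv v x * trans I p q v x y) N - piv v y)).
      { apply CV_minus. rewrite bs_eq. apply cv_gsum. intros x _. rewrite Rmult_comm.
        apply (cv_ext_ev (fun t => trans I p q v x y * Pn I p q v t (theta I) x) _ _ 0). intros; ring.
        apply cv_scal, piv_cv. apply (cv_shift (fun t => Pn I p q v t (theta I) y)), piv_cv. }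
      apply (lim_abs_le _ _ _ 0 Hcv). intros t _.
      rewrite Pn_S by (auto; apply theta_valid).
      assert (E : gsum (box N I) (fun x => Pn I p q v t (theta I) x * trans I p q v x y) =
                  expect I p q v t (fun z => if inb N z then trans I p q v z y else 0) (theta I)).
      { unfold Pn. rewrite (gsum_ext_in _ _ (fun x => expect I p q v t (fun z => trans I p q v x y * indic x z) (theta I)))
          by (intros; rewrite expect_scal; ring).
        transitivity (expect I p q v t (fun z => gsum (box N I) (fun x => trans I p q v x y * indic x z)) (theta I)).
        - symmetry. apply (expect_gsum v t (box N I) (fun x z => trans I p q v x y * indic x z)).
        - apply expect_ext; [|apply theta_valid]. intros z Hz. rewrite (box_single N I (fun x => trans I p q v x y)) by apply Hz.
          reflexivity. }
      rewrite E. rewrite <- expect_minus.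
      rewrite (expect_ext v t _ (fun z => - (if inb N z then 0 else trans I p q v z y))) by (try apply theta_valid; intros; destruct (inb N z); ring).
      rewrite (expect_ext v t _ (fun z => (-1) * (if inb N z then 0 else trans I p q v z y))) by (try apply theta_valid; intros; ring).
      rewrite expect_scal. rewrite Rabs_mult. replace (Rabs (-1)) with 1 by (rewrite Rabs_left; lra). rewrite Rmult_1_l.
      assert (H1 : 0 <= expect I p q v t (fun z => if inb N z then 0 else trans I p q v z y) (theta I)).
      { apply expect_nonneg. apply theta_valid. intros z _. destruct (inb N z). lra. apply trans_nonneg. }
      assert (H2 : expect I p q v t (fun z => if inb N z then 0 else trans I p q v z y) (theta I) <=
                   expect I p q v t (fun z => if inb N z then 0 else 1) (theta I)).
      { apply expect_mono; [|apply theta_valid]. intros z Hz. destruct (inb N z). lra. apply trans_le1; auto. }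
      assert (H3 := tail_mass v t N). rewrite Rabs_right by lra. lra.
Qed.

Lemma trans_theta_pos v x : valid I x -> 0 < trans I p q v x (theta I).
Proof. intros Hx. eapply Rlt_le_trans; [|apply Rge_le, trans_theta_lower].
  apply Rmult_lt_0_compat; [lra|]. apply gprod_pos. intros i Hi. apply in_seq in Hi.
  destruct (nth i x 0%nat) as [|n] eqn:E. rewrite pow_O; lra.
  apply pow_lt. unfold Rdiv. apply Rmult_lt_0_compat. apply q_pos; lia. apply Rinv_0_lt_compat, lt_0_INR; lia. Qed.

Lemma Pn1_theta v x : valid I x -> Pn I p q v 1 x (theta I) > 0.
Proof. intros Hx. unfold Pn. simpl expect. rewrite Pf_indic by apply theta_valid. apply trans_theta_pos; auto. Qed.

Lemma Kc_pos c : 0 <= c -> 0 < Kc c.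
Proof. intros Hc. unfold Kc. assert (Hb := beta_bounds). assert (H := BB_pos).
  assert (0 <= 2 / beta) by (unfold Rdiv; apply Rmult_le_pos; [lra|apply Rlt_le, Rinv_0_lt_compat; lra]).
  assert (0 <= c * (2 / beta + BB + 1)) by (apply Rmult_le_pos; lra). lra. Qed.

Lemma bs_indic pi y M : valid I y -> (list_max y <= M)%nat -> boxsum I (fun z => pi z * indic y z) M = pi y.
Proof. intros Hy HM. rewrite bs_eq. rewrite (gsum_ext_in _ _ (fun z => pi z * indic z y)) by (intros; rewrite indic_sym; auto).
  rewrite box_single by apply Hy. rewrite (inb_mono (list_max y) M y HM (inb_max y)). auto. Qed.

Lemma piv_unique v pi' (Hpi' : stationary I p q v pi') y : valid I y -> pi' y = piv v y.
Proof. intros Hy.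
  destruct (core v pi' Hpi' 1 (indic y) ltac:(lra) (indic_bound y)) as [s [[_ Hs] Hb]].
  assert (Es : s = pi' y).
  { apply (UL_sequence _ _ _ Hs). apply (cv_eventually _ _ (list_max y)). intros; apply bs_indic; auto. }
  subst s. apply (UL_sequence (fun t => Pn I p q v t (theta I) y)); [|apply piv_cv].
  apply (cv_near _ (fun _ => pi' y) (fun t => abar ^ t * (Kc 1 * (1 + Phi I a (theta I))))).
  apply cv_const. apply cv_geom. assert (H := abar_bounds). lra.
  intros t. rewrite Rmult_comm. apply Hb. apply theta_valid. Qed.

Lemma tv_bound v x t N : valid I x ->
  boxsum I (fun y => Rabs (Pn I p q v t x y - piv v y)) N <= Kc 1 * (1 + Phi I a x) * abar ^ t.
Proof. intros Hx.
  set (sg := fun y => if Rle_dec 0 (Pn I p q v t x y - piv v y) then 1 else -1).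
  set (f := fun z => gsum (box N I) (fun y => sg y * indic y z)).
  assert (Hf : forall z, valid I z -> Rabs (f z) <= 1 * Phi I a z).
  { intros z Hz. unfold f. rewrite box_single by apply Hz. assert (H := Phi_ge1 z).
    destruct (inb N z). unfold sg. destruct (Rle_dec _ _). rewrite Rabs_R1; lra. rewrite Rabs_left; lra.
    rewrite Rabs_R0; lra. }
  destruct (core v (piv v) (piv_stationary v) 1 f ltac:(lra) Hf) as [s [[_ Hs] Hb]].
  assert (E1 : expect I p q v t f x = gsum (box N I) (fun y => sg y * Pn I p q v t x y)).
  { unfold f. rewrite expect_gsum. apply gsum_ext_in. intros y _. rewrite expect_scal. reflexivity. }
  assert (E2 : s = gsum (box N I) (fun y => sg y * piv v y)).
  { apply (UL_sequence _ _ _ Hs). apply (cv_eventually _ _ N). intros M HM.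
    rewrite bs_eq. unfold f.
    transitivity (gsum (box M I) (fun z => gsum (box N I) (fun y => sg y * (piv v z * indic y z)))).
    apply gsum_ext_in; intros; rewrite <- gsum_scal; apply gsum_ext_in; intros; ring.
    rewrite gsum_swap. apply gsum_ext_in. intros y Hy. apply box_in in Hy. rewrite gsum_scal.
    f_equal. apply bs_indic. apply Hy. assert (H := max_le_inb N y (proj2 Hy)). lia. }
  assert (E3 : boxsum I (fun y => Rabs (Pn I p q v t x y - piv v y)) N = expect I p q v t f x - s).
  { rewrite E1, E2, bs_eq, <- gsum_minus. apply gsum_ext_in. intros y _. unfold sg.
    destruct (Rle_dec 0 (Pn I p q v t x y - piv v y)). rewrite Rabs_right; lra. rewrite Rabs_left; lra. }
  rewrite E3. eapply Rle_trans; [apply Rle_abs|]. apply Hb; auto. Qed.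

Lemma part0 v : policy I v ->
     (forall x, valid I x -> reach I p q v x (theta I)) /\
     aperiodic I p q v /\
     exists pi, stationary I p q v pi /\
       (forall pi', stationary I p q v pi' -> forall x, valid I x -> pi' x = pi x) /\
       exists rho (M : state -> R), 0 < rho < 1 /\
         forall x, valid I x -> in_class I p q v x ->
         forall t N, boxsum I (fun y => Rabs (Pn I p q v t x y - pi y)) N <= M x * rho ^ t.
Proof. intros _. split; [|split].
  - intros x Hx. exists 1%nat. apply Pn1_theta; auto.
  - intros d Hd H. apply Nat.divide_1_r. apply H; auto. apply Pn1_theta, theta_valid.
  - exists (piv v). split; [apply piv_stationary|split].
    + intros pi' Hpi' x Hx. exact (piv_unique v pi' Hpi' x Hx).
    + exists abar, (fun x => Kc 1 * (1 + Phi I a x)). split. apply abar_bounds.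
      intros x Hx _ t N. apply tv_bound; auto. Qed.

Definition Mu := 2 * bb / alpha.
Definition Uf (z : state) : R := if list_eq_dec Nat.eq_dec z (theta I) then 0 else Phi I a z + Mu.

Lemma Mu_ge2 : 2 <= Mu.
Proof. unfold Mu. assert (H := bb_ge1). assert (H2 := alpha_bounds).
  apply (Rmult_le_reg_r alpha); [lra|]. unfold Rdiv. rewrite Rmult_assoc, Rinv_l by lra. nra. Qed.

Lemma Uf_le z : Uf z <= Phi I a z + Mu.
Proof. unfold Uf. assert (H := Phi_nonneg z). assert (H2 := Mu_ge2). destruct (list_eq_dec _ _ _); lra. Qed.
Lemma Uf_nonneg z : 0 <= Uf z.
Proof. unfold Uf. assert (H := Phi_nonneg z). assert (H2 := Mu_ge2). destruct (list_eq_dec _ _ _); lra. Qed.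

Lemma Uf_drift v x : valid I x -> x <> theta I -> Pf I p q v Uf x <= abar * Uf x.
Proof. intros Hx Hne.
  assert (H1 : Pf I p q v Uf x <= Pf I p q v (fun z => Phi I a z + Mu * ((fun _ => 1) z - indic (theta I) z)) x).
  { apply Pf_mono. intros z Hz. unfold Uf, indic. assert (H := Phi_nonneg z).
    destruct (list_eq_dec Nat.eq_dec z (theta I)); lra. }
  rewrite Pf_plus, Pf_scal, Pf_minus, Pf_one, Pf_indic in H1 by (auto; apply theta_valid).
  replace (Uf x) with (Phi I a x + Mu) by (unfold Uf; destruct (list_eq_dec Nat.eq_dec x (theta I)); [contradiction|auto]).
  assert (Hd := drift v x Hx). assert (Hab := abar_bounds). assert (Hb := beta_bounds). assert (Hg := gam_bounds).
  assert (Hal := alpha_bounds). assert (HM := Mu_ge2). assert (HT := trans_le1 v x (theta I) Hx (theta_valid I)).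
  assert (HT0 := trans_nonneg v x (theta I)). assert (HMa : Mu * alpha = 2 * bb) by (unfold Mu; field; lra).
  assert (Hk : (1 - abar) * Mu <= bb) by nra.
  destruct (Rle_or_lt (Phi I a x) Rr) as [Hs|Hl].
  - assert (HTa := trans_theta_alpha v x Hx Hs).
    assert (Mu * (1 - trans I p q v x (theta I)) <= Mu * (1 - alpha)) by (apply Rmult_le_compat_l; lra).
    assert (Hpx := Phi_nonneg x). assert ((abar - gam) * Phi I a x >= 0) by (apply Rle_ge, Rmult_le_pos; lra). nra.
  - assert (Mu * (1 - trans I p q v x (theta I)) <= Mu) by nra.
    assert (HR : Rr * (1 - gam) = 4 * (1 + bb)) by (unfold Rr; field; lra).
    assert ((abar - gam) * Phi I a x >= (1 - gam) / 2 * Rr) by (apply Rle_ge, Rmult_le_compat; try lra; assert (H0 := Rr_pos); lra).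
    nra. Qed.

Fixpoint survf v (t : nat) (x : state) : R :=
  match t with
  | O => 1
  | S t' => if list_eq_dec Nat.eq_dec x (theta I) then 0 else Pf I p q v (survf v t') x
  end.

Lemma hit_surv v t x : valid I x -> hit_prob I p q v t x = survf v t x - survf v (S t) x.
Proof. revert x. induction t; intros x Hx; simpl.
  - destruct (list_eq_dec Nat.eq_dec x (theta I)). ring. rewrite Pf_one; auto. ring.
  - destruct (list_eq_dec Nat.eq_dec x (theta I)). ring.
    rewrite <- Pf_minus. apply Pf_ext. intros z Hz. apply IHt; auto. Qed.

Lemma surv_nonneg v t x : valid I x -> 0 <= survf v t x.
Proof. revert x. induction t; intros x Hx; simpl. lra. destruct (list_eq_dec _ _ _). lra.
  apply Pf_nonneg. auto. Qed.

Lemma surv_boundS v t z : valid I z -> survf v (S t) z <= abar ^ (S t) * Uf z.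
Proof. revert z. induction t; intros z Hz.
  - simpl survf. unfold Uf. destruct (list_eq_dec _ _ _). lra.
    rewrite Pf_one by auto. assert (H := Phi_ge1 z). assert (H2 := Mu_ge2). assert (Hab := abar_bounds).
    assert (Hg := gam_bounds). simpl. nra.
  - change (survf v (S (S t)) z) with (if list_eq_dec Nat.eq_dec z (theta I) then 0 else Pf I p q v (survf v (S t)) z).
    destruct (list_eq_dec _ _ _) as [E|E].
    + subst. unfold Uf. destruct (list_eq_dec _ _ _); [|congruence]. lra.
    + eapply Rle_trans. apply (Pf_mono v _ (fun w => abar ^ S t * Uf w)). intros; apply IHt; auto.
      rewrite Pf_scal. assert (H := Uf_drift v z Hz E). assert (Hab := abar_bounds).
      assert (0 <= abar ^ S t) by (apply pow_le; lra). simpl pow. simpl pow in H0. nra. Qed.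

Lemma surv_bound v t x : valid I x -> x <> theta I -> survf v t x <= abar ^ t * Uf x.
Proof. intros Hx Hne. destruct t. simpl. unfold Uf. destruct (list_eq_dec _ _ _); [contradiction|].
  assert (H := Phi_ge1 x). assert (H2 := Mu_ge2). lra. apply surv_boundS; auto. Qed.

Definition a1 := ln (2 / (1 + abar)).
Definition kk := 2 * abar / (1 + abar).
Definition K1 (x : state) := Uf x * ((1 + abar) / (1 - abar)).

Lemma kk_bounds : 0 < kk < 1.
Proof. unfold kk. assert (H := abar_bounds). split. apply Rmult_lt_0_compat; [lra|apply Rinv_0_lt_compat; lra].
  apply (Rmult_lt_reg_r (1 + abar)); [lra|]. unfold Rdiv. rewrite Rmult_assoc, Rinv_l; lra. Qed.

Lemma a1_pos : 0 < a1.
Proof. unfold a1. rewrite <- ln_1. assert (H := abar_bounds). apply ln_increasing. lra.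
  apply (Rmult_lt_reg_r (1 + abar)); [lra|]. unfold Rdiv. rewrite Rmult_assoc, Rinv_l; lra. Qed.

Lemma exp_a1 t : exp (a1 * INR t) = (2 / (1 + abar)) ^ t.
Proof. rewrite Rmult_comm, <- exp_pow_INR. unfold a1. rewrite exp_ln; auto.
  assert (H := abar_bounds). apply Rmult_lt_0_compat; [lra|apply Rinv_0_lt_compat; lra]. Qed.

Lemma hit_sum v x n : valid I x -> sum_f_R0 (fun t => hit_prob I p q v t x) n = 1 - survf v (S n) x.
Proof. intros Hx. induction n.
  - change (hit_prob I p q v 0 x = 1 - survf v 1 x). rewrite hit_surv by auto. reflexivity.
  - change (sum_f_R0 (fun t => hit_prob I p q v t x) n + hit_prob I p q v (S n) x = 1 - survf v (S (S n)) x).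
    rewrite IHn, hit_surv by auto. ring. Qed.

Lemma part1 : exists a1 : R, 0 < a1 /\ exists K : state -> R,
     forall v, policy I v -> forall x, valid I x -> x <> theta I ->
       infinite_sum (fun t => hit_prob I p q v t x) 1 /\
       forall n, sum_f_R0 (fun t => exp (a1 * INR t) * hit_prob I p q v t x) n <= K x.
Proof. exists a1. split. apply a1_pos. exists K1. intros v _ x Hx Hne. split.
  - intros e He. destruct (geom_small abar (abar * Uf x) e ltac:(assert (H := abar_bounds); lra) He) as [N HN].
    exists N. intros n Hn. unfold Rdist. rewrite hit_sum by auto.
    assert (H1 := surv_nonneg v (S n) x Hx). assert (H2 := surv_bound v (S n) x Hx Hne).
    replace (1 - survf v (S n) x - 1) with (- survf v (S n) x) by ring. rewrite Rabs_Ropp, Rabs_right by lra.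
    eapply Rle_lt_trans; [apply H2|]. eapply Rle_lt_trans; [|apply HN]. simpl pow.
    assert (Hab := abar_bounds). assert (HU := Uf_nonneg x).
    assert (abar ^ n <= abar ^ N) by (apply pow_decr; [lra|lia]).
    assert (0 <= abar * Uf x) by (apply Rmult_le_pos; lra).
    replace (abar * abar ^ n * Uf x) with (abar ^ n * (abar * Uf x)) by ring. apply Rmult_le_compat_r; auto.
  - intros n. assert (Hk := kk_bounds). assert (Hab := abar_bounds). assert (HU := Uf_nonneg x).
    apply Rle_trans with (sum_f_R0 (fun t => kk ^ t * Uf x) n).
    + apply sum_Rle. intros t _. rewrite exp_a1. rewrite hit_surv by auto.
      assert (H1 := surv_nonneg v (S t) x Hx). assert (H2 := surv_bound v t x Hx Hne).
      assert (H3 : 0 <= (2 / (1 + abar)) ^ t) by (apply pow_le; apply Rmult_le_pos; [lra|apply Rlt_le, Rinv_0_lt_compat; lra]).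
      apply Rle_trans with ((2 / (1 + abar)) ^ t * (abar ^ t * Uf x)).
      apply Rmult_le_compat_l; auto. lra.
      unfold kk. replace (2 * abar / (1 + abar)) with ((2 / (1 + abar)) * abar) by (field; lra).
      rewrite Rpow_mult_distr. lra.
    + rewrite <- scal_sum, tech3 by lra. unfold K1.
      replace ((1 + abar) / (1 - abar)) with (1 / (1 - kk)) by (unfold kk; field; lra).
      apply Rmult_le_compat_l; auto. unfold Rdiv. apply Rmult_le_compat_r. apply Rlt_le, Rinv_0_lt_compat; lra.
      assert (0 <= kk ^ S n) by (apply pow_le; lra). lra. Qed.

Lemma total_eq z : total I z = gsum (seq 0 I) (fun i => INR (nth i z 0%nat)).
Proof. unfold total. apply fold_plus_map. Qed.

Lemma total_le z : total I z <= Phi I a z / a.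
Proof. rewrite total_eq, Phi_eq. unfold Rdiv. rewrite Rmult_comm, <- gsum_scal. apply gsum_le_in. intros i _.
  assert (H := exp_ineq1_le (a * INR (nth i z 0%nat))). assert (0 <= INR (nth i z 0%nat)) by apply pos_INR.
  apply (Rmult_le_reg_l a); auto. rewrite <- Rmult_assoc, Rinv_r by lra. lra. Qed.

Lemma total_theta : total I (theta I) = 0.
Proof. rewrite total_eq. rewrite (gsum_ext_in _ _ (fun _ => 0)). apply gsum_zero. intros; rewrite nth_theta; simpl; auto. Qed.

Lemma part3 : exists C, forall v, policy I v -> forall pi, stationary I p q v pi ->
     forall N, boxsum I (fun x => pi x * total I x) N <= C.
Proof. exists (BB / a). intros v _ pi Hpi N. eapply Rle_trans.
  apply (bs_le _ (fun x => / a * (pi x * Phi I a x))). intros z Hz. assert (H := total_le z).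
  assert (H2 := pi_nonneg v pi Hpi z Hz). unfold Rdiv in H.
  replace (/ a * (pi z * Phi I a z)) with (pi z * (Phi I a z * / a)) by ring. apply Rmult_le_compat_l; auto.
  rewrite bs_scal. unfold Rdiv. rewrite Rmult_comm. apply Rmult_le_compat_r. apply Rlt_le, Rinv_0_lt_compat; lra.
  apply piPhi_bound with v; auto. Qed.

Lemma tight_bound v pi (Hpi : stationary I p q v pi) N : 1 - boxsum I pi N <= exp (- a) ^ (S N) * BB.
Proof. apply (lim_le (fun M => boxsum I pi M - boxsum I pi N) _ _ N).
  apply CV_minus. apply pi_cv1 with v; auto. apply cv_const.
  intros M HM. rewrite (bs_split pi N M HM). ring_simplify.
  eapply Rle_trans. apply (bs_le _ (fun z => exp (- a) ^ (S N) * (pi z * Phi I a z))).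
  intros z Hz. assert (H := pi_nonneg v pi Hpi z Hz). destruct (inb N z) eqn:E.
  apply Rmult_le_pos. apply pow_le, Rlt_le, exp_pos. apply Rmult_le_pos; auto; apply Phi_nonneg.
  assert (H2 := out_le_Phi z N Hz E). nra.
  rewrite bs_scal. apply Rmult_le_compat_l. apply pow_le, Rlt_le, exp_pos. apply piPhi_bound with v; auto. Qed.

Lemma part_tight : forall eps, 0 < eps -> exists N, forall v, policy I v -> forall pi,
     stationary I p q v pi -> 1 - boxsum I pi N <= eps.
Proof. intros e He. assert (H := expna).
  destruct (geom_small (exp (- a)) (exp (- a) * BB) e ltac:(lra) He) as [N HN].
  exists N. intros v _ pi Hpi. eapply Rle_trans. apply tight_bound with v; auto.
  simpl pow. lra. Qed.

Definition kap := 1 / (a * (1 - abar)).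

Lemma taboo_le v n x : valid I x -> taboo_sum I p q v (total I) n x <= kap * Uf x.
Proof. assert (Hab := abar_bounds).
  assert (Hk : 0 < kap) by (unfold kap; unfold Rdiv; rewrite Rmult_1_l; apply Rinv_0_lt_compat, Rmult_lt_0_compat; lra).
  assert (Htot : forall z, z <> theta I -> total I z <= kap * (1 - abar) * Uf z).
  { intros z Hz. replace (kap * (1 - abar)) with (/ a) by (unfold kap; field; lra).
    unfold Uf. destruct (list_eq_dec _ _ _); [contradiction|]. assert (H := total_le z). assert (H2 := Mu_ge2).
    unfold Rdiv in H. assert (0 < / a) by (apply Rinv_0_lt_compat; lra). nra. }
  revert x. induction n; intros x Hx; simpl.
  - destruct (list_eq_dec Nat.eq_dec x (theta I)) as [E|E].
    + subst. rewrite total_theta. unfold Uf. destruct (list_eq_dec _ _ _); [|congruence]. lra.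
    + assert (H := Htot x E). assert (HU := Uf_nonneg x). assert (0 <= kap * abar * Uf x) by (apply Rmult_le_pos; [nra|auto]). nra.
  - destruct (list_eq_dec Nat.eq_dec x (theta I)) as [E|E].
    + subst. rewrite total_theta. unfold Uf. destruct (list_eq_dec _ _ _); [|congruence]. lra.
    + assert (H := Htot x E). eapply Rle_trans. apply Rplus_le_compat_l. apply (Pf_mono v _ (fun z => kap * Uf z)).
      intros; apply IHn; auto. rewrite Pf_scal. assert (H2 := Uf_drift v x Hx E). nra. Qed.

Lemma part4 : exists C, forall v, policy I v -> forall pi, stationary I p q v pi ->
     forall n N, boxsum I (fun x => pi x * taboo_sum I p q v (total I) n x) N <= C.
Proof. exists (kap * (BB + Mu)). intros v _ pi Hpi n N. assert (Hab := abar_bounds).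
  assert (Hk : 0 < kap) by (unfold kap; unfold Rdiv; rewrite Rmult_1_l; apply Rinv_0_lt_compat, Rmult_lt_0_compat; lra).
  eapply Rle_trans. apply (bs_le _ (fun x => kap * (pi x * Phi I a x) + (kap * Mu) * pi x)).
  intros z Hz. assert (H := taboo_le v n z Hz). assert (H2 := pi_nonneg v pi Hpi z Hz). assert (H3 := Uf_le z).
  apply Rle_trans with (pi z * (kap * Uf z)). apply Rmult_le_compat_l; auto.
  assert (kap * Uf z <= kap * (Phi I a z + Mu)) by (apply Rmult_le_compat_l; lra). nra.
  rewrite bs_plus, !bs_scal. assert (H1 := piPhi_bound v pi Hpi N). assert (H2 := pi_le1 v pi Hpi N).
  assert (HM := Mu_ge2). assert (kap * boxsum I (fun z => pi z * Phi I a z) N <= kap * BB) by (apply Rmult_le_compat_l; lra).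
  assert (kap * Mu * boxsum I pi N <= kap * Mu * 1) by (apply Rmult_le_compat_l; nra). nra. Qed.

Lemma part2 : forall f : state -> R,
     (exists c, forall x, valid I x -> Rabs (f x) <= c * Phi I a x) ->
     exists K eta, 0 < K /\ 0 < eta < 1 /\
       forall v, policy I v -> forall pi, stationary I p q v pi ->
         exists s, has_sum I (fun y => pi y * f y) s /\
           forall x, valid I x -> forall t,
             Rabs (expect I p q v t f x - s) <= K * (1 + Phi I a x) * eta ^ t.
Proof. intros f [c Hc]. set (c' := Rmax 0 c). assert (Hc' : 0 <= c') by apply Rmax_l.
  assert (Hf : forall z, valid I z -> Rabs (f z) <= c' * Phi I a z).
  { intros z Hz. eapply Rle_trans; [apply Hc; auto|]. apply Rmult_le_compat_r. apply Phi_nonneg. apply Rmax_r. }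
  exists (Kc c'), abar. split. apply Kc_pos; auto. split. apply abar_bounds.
  intros v _ pi Hpi. exact (core v pi Hpi c' f Hc' Hf). Qed.

Lemma main_result :
  (forall v, policy I v ->
     (forall x, valid I x -> reach I p q v x (theta I)) /\
     aperiodic I p q v /\
     exists pi, stationary I p q v pi /\
       (forall pi', stationary I p q v pi' -> forall x, valid I x -> pi' x = pi x) /\
       exists rho (M : state -> R), 0 < rho < 1 /\
         forall x, valid I x -> in_class I p q v x ->
         forall t N, boxsum I (fun y => Rabs (Pn I p q v t x y - pi y)) N <= M x * rho ^ t)
  /\
  (exists a1 : R, 0 < a1 /\ exists K : state -> R,
     forall v, policy I v -> forall x, valid I x -> x <> theta I ->
       infinite_sum (fun t => hit_prob I p q v t x) 1 /\
       forall n, sum_f_R0 (fun t => exp (a1 * INR t) * hit_prob I p q v t x) n <= K x)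
  /\
  (forall f : state -> R,
     (exists c, forall x, valid I x -> Rabs (f x) <= c * Phi I a x) ->
     exists K eta, 0 < K /\ 0 < eta < 1 /\
       forall v, policy I v -> forall pi, stationary I p q v pi ->
         exists s, has_sum I (fun y => pi y * f y) s /\
           forall x, valid I x -> forall t,
             Rabs (expect I p q v t f x - s) <= K * (1 + Phi I a x) * eta ^ t)
  /\
  (exists C, forall v, policy I v -> forall pi, stationary I p q v pi ->
     forall N, boxsum I (fun x => pi x * total I x) N <= C)
  /\
  (forall eps, 0 < eps -> exists N, forall v, policy I v -> forall pi,
     stationary I p q v pi -> 1 - boxsum I pi N <= eps)
  /\
  (exists C, forall v, policy I v -> forall pi, stationary I p q v pi ->
     forall n N, boxsum I (fun x => pi x * taboo_sum I p q v (total I) n x) N <= C).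
Proof. split; [exact part0|]. split; [exact part1|]. split; [exact part2|].
  split; [exact part3|]. split; [exact part_tight|exact part4]. Qed.
End Q.

Theorem lemma2 (I : nat) (p a : R) (q : nat -> R)
  (HI : (1 <= I)%nat)
  (Hp : 0 < p < 1)
  (Hq0 : q 0%nat < 1)
  (Hqdec : forall i, (S i < I)%nat -> q (S i) < q i)
  (HqI : 2 * p < q (I - 1)%nat)
  (Ha : 0 < a)
  (Hadrift : p * (exp a - 1) < q (I - 1)%nat / 2 * (1 - exp (- a))) :
  (* structure + geometric ergodicity, for every stationary policy *)
  (forall v, policy I v ->
     (forall x, valid I x -> reach I p q v x (theta I)) /\
     aperiodic I p q v /\
     exists pi, stationary I p q v pi /\
       (forall pi', stationary I p q v pi' -> forall x, valid I x -> pi' x = pi x) /\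
       exists rho (M : state -> R), 0 < rho < 1 /\
         forall x, valid I x -> in_class I p q v x ->
         forall t N, boxsum I (fun y => Rabs (Pn I p q v t x y - pi y)) N <= M x * rho ^ t)
  /\
  (* (1) exponential moment of the hitting time of theta, uniformly in v *)
  (exists a1 : R, 0 < a1 /\ exists K : state -> R,
     forall v, policy I v -> forall x, valid I x -> x <> theta I ->
       infinite_sum (fun t => hit_prob I p q v t x) 1 /\
       forall n, sum_f_R0 (fun t => exp (a1 * INR t) * hit_prob I p q v t x) n <= K x)
  /\
  (* (2) exponential convergence of E[f(X_t)] for f = O(Phi), uniformly in v *)
  (forall f : state -> R,
     (exists c, forall x, valid I x -> Rabs (f x) <= c * Phi I a x) ->
     exists K eta, 0 < K /\ 0 < eta < 1 /\
       forall v, policy I v -> forall pi, stationary I p q v pi ->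
         exists s, has_sum I (fun y => pi y * f y) s /\
           forall x, valid I x -> forall t,
             Rabs (expect I p q v t f x - s) <= K * (1 + Phi I a x) * eta ^ t)
  /\
  (* (3) uniform bound on stationary mean total queue length, and tightness *)
  (exists C, forall v, policy I v -> forall pi, stationary I p q v pi ->
     forall N, boxsum I (fun x => pi x * total I x) N <= C)
  /\
  (forall eps, 0 < eps -> exists N, forall v, policy I v -> forall pi,
     stationary I p q v pi -> 1 - boxsum I pi N <= eps)
  /\
  (* (4) uniform bound on E_pi[ sum_{t=0}^{tau_theta} sum_i X^i_t ] *)
  (exists C, forall v, policy I v -> forall pi, stationary I p q v pi ->
     forall n N, boxsum I (fun x => pi x * taboo_sum I p q v (total I) n x) N <= C).
Proof.
  intros. eapply main_result; eauto.
Qed.
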